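(* A graph $3$-partition $\mathscr{G}=(G_{<},G_{=},G_{>},\sigma)$ can be explained by a relaxed scenario if and only if it can be explained by a restricted scenario.
   Context: All trees are planted phylogenetic trees: a tree $T$ has a distinguished vertex $0_T$ of degree $1$ whose unique neighbor $\rho_T$ is the root, and every vertex other than $0_T$ and the leaves $L(T)$ has at least two children. For $x,y\in V(T)$ write $y\preceq_T x$ if $x$ lies on the path from $0_T$ to $y$; edges are written $uv$ with $v\prec_T u$. The order extends to $V(T)\cup E(T)$: for a vertex $x$ and an edge $e=uv$, $x\preceq_T e$ iff $x\preceq_T v$, and $e\preceq_T x$ iff $u\preceq_T x$; for edges, $uv\preceq_T ab$ iff $v\preceq_T b$. Two elements are comparable if one is $\preceq$ the other. $V^0(T)=V(T)\setminus(L(T)\cup\{0_T\})$; $\mathrm{lca}_T$ denotes the last common ancestor; $\mathrm{child}_T(u)$ is the set of children of $u$. A time map for $T$ is $\tau_T\colon V(T)\to\mathbb{R}$ with $\tau_T(x)<\tau_T(y)$ whenever $x\prec_T y$. A relaxed scenario $\mathscr{S}=(T,S,\sigma,\mu,\tau_T,\tau_S)$ consists of a gene tree $T$ with time map $\tau_T$, a species tree $S$ with time map $\tau_S$, a map $\sigma\colon L(T)\to M$ with $M\subseteq L(S)$, and a map $\mu\colon V(T)\to V(S)\cup E(S)$ such that (S0) $\mu(x)=0_S$ iff $x=0_T$; (S1) $\mu(x)\in L(S)$ iff $x\in L(T)$, in which case $\mu(x)=\sigma(x)$; (S2) if $\mu(x)\in V(S)$ then $\tau_S(\mu(x))=\tau_T(x)$;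 (S3) if $\mu(x)=uv\in E(S)$ then $\tau_S(v)<\tau_T(x)<\tau_S(u)$. The graphs $G_{=}(\mathscr{S})$, $G_{<}(\mathscr{S})$, $G_{>}(\mathscr{S})$ have vertex set $L(T)$, and for distinct $x,y$ the pair $xy$ is an edge of $G_{=}(\mathscr{S})$, $G_{<}(\mathscr{S})$, resp. $G_{>}(\mathscr{S})$ iff $\tau_T(\mathrm{lca}_T(x,y))$ is $=$, $<$, resp. $>$ than $\tau_S(\mathrm{lca}_S(\sigma(x),\sigma(y)))$. An edge $uv\in E(T)$ is an HGT-edge if $\mu(u)$ and $\mu(v)$ are incomparable in $S$. A leaf $x\in L(T)$ is a witness for $v\in V(T)$ if $x\preceq_T v$ and the path from $v$ to $x$ contains no HGT-edge. A restricted scenario is a relaxed scenario satisfying (S4) every vertex of $T$ has a witness; (S5) if $\mu(u)\in V^0(S)$ then $\mu(v)\prec_S\mu(u)$ for all $v\in\mathrm{child}_T(u)$; (S6) if $\mu(u)\in V^0(S)$ then there exist leaves $x,y\in L(T)$ with $\mathrm{lca}_T(x,y)=u$, both witnesses for $u$, and $\mu(u)=\mathrm{lca}_S(\sigma(x),\sigma(y))$. A graph $3$-partition $\mathscr{G}=(G_{<},G_{=},G_{>},\sigma)$ is an ordered tuple of three edge-disjoint graphs on a common vertex set $L$ with a coloring $\sigma\colon L\to M$ such that every unordered pair of distinct elements of $L$ is an edge of exactly one of the three graphs; it is explained by a scenario $\mathscr{S}$ (with the same $\sigma$) if $G_{<}=G_{<}(\mathscr{S})$, $G_{=}=G_{=}(\mathscr{S})$,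 $G_{>}=G_{>}(\mathscr{S})$. *)

(* Defs.v *)
From mathcomp Require Import all_boot all_order all_algebra.
From mathcomp Require Import reals.
Set Implicit Arguments. Unset Strict Implicit. Unset Printing Implicit Defensive.
Import Order.TTheory GRing.Theory Num.Theory.
Local Open Scope ring_scope.

(* A rooted tree on a finite vertex type V is given by a parent map [par]
   and a distinguished vertex [z] (the planting vertex 0_T), with par z = z
   by convention.  The edges are the pairs (par v, v) for v != z, so an
   edge is represented by its lower endpoint v. *)

Section Trees.
Variable V : finType.
Variables (z : V) (par : V -> V).

(* y \preceq x : x lies on the path from z to y, i.e. x is reached from y
   by iterating par. *)
Definition anc (y x : V) : bool := connect (frel par) y x.

Definition children (u : V) : {set V} := [set w | (w != u) && (par w == u)].

Definition leaves : {set V} := [set v | (v != z) && (children v == set0)].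

Definition inner (v : V) : bool := (v != z) && (v \notin leaves).

Definition planted_phylo : Prop :=
  [/\ par z = z,
      (forall v, anc v z),
      #|children z| = 1%N &
      (forall v, v != z -> v \notin leaves -> (2 <= #|children v|)%N)].

Definition is_lca (x y w : V) : bool :=
  [&& anc x w, anc y w & [forall u, (anc x u && anc y u) ==> anc w u]].
Definition lca (x y : V) : V := odflt z [pick w | is_lca x y w].

(* elements of V(T) \cup E(T): inl v = vertex v, inr v = edge (par v, v) *)
Definition is_elem (a : V + V) : bool :=
  match a with inl _ => true | inr v => v != z end.

Definition le_el (a b : V + V) : bool :=
  match a, b with
  | inl x, inl y => anc x y
  | inl x, inr v => anc x v
  | inr v, inl x => anc (par v) x
  | inr v, inr w => anc v w
  end.
Definition lt_el (a b : V + V) : bool := le_el a b && (a != b).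
Definition comparable_el (a b : V + V) : bool := le_el a b || le_el b a.

Variable R : realType.
Definition time_map (tau : V -> R) : Prop :=
  forall x y, anc x y -> x != y -> tau x < tau y.

End Trees.

(* Graph 3-partition on vertex set L (the coloring sigma is carried along). *)
Definition graph_3partition (L : finType) (Glt Geq Ggt : rel L) : Prop :=
  [/\ symmetric Glt, symmetric Geq & symmetric Ggt] /\
  [/\ irreflexive Glt, irreflexive Geq & irreflexive Ggt] /\
      (forall x y, x != y ->
         [&& Glt x y || Geq x y || Ggt x y,
             ~~ (Glt x y && Geq x y), ~~ (Glt x y && Ggt x y)
           & ~~ (Geq x y && Ggt x y)]).

Section Scenario.
Variables (R : realType) (L M : finType) (sigma : L -> M).
Variables (VT VS : finType) (zT : VT) (parT : VT -> VT) (zS : VS) (parS : VS -> VS).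
Variables (tauT : VT -> R) (tauS : VS -> R).
(* lf identifies L with the leaf set L(T); mS identifies M with a subset of L(S) *)
Variables (lf : L -> VT) (mS : M -> VS) (mu : VT -> VS + VS).

Definition relaxed_scenario : Prop :=
  [/\ planted_phylo zT parT, planted_phylo zS parS,
      time_map parT tauT & time_map parS tauS] /\
  [/\ (injective lf /\ forall v, v \in leaves zT parT <-> exists l, v = lf l),
      (injective mS /\ forall c, mS c \in leaves zS parS) &
      (forall x, is_elem zS (mu x))] /\
  [/\
      (forall x, mu x = inl zS <-> x = zT),
      ((forall x, (exists2 s, mu x = inl s & s \in leaves zS parS)
                  <-> x \in leaves zT parT)
       /\ forall l, mu (lf l) = inl (mS (sigma l))),
      (forall x s, mu x = inl s -> tauS s = tauT x) &
      (forall x v, mu x = inr v -> tauS v < tauT x < tauS (parS v))].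

Definition hgt (v : VT) : bool :=
  ~~ comparable_el parS (mu (parT v)) (mu v).

Definition witness (x v : VT) : Prop :=
  [/\ x \in leaves zT parT, anc parT x v &
      forall w, anc parT x w -> anc parT w v -> w != v -> w != zT -> ~~ hgt w].

Definition restricted_scenario : Prop :=
  [/\ relaxed_scenario,
      (* (S4) *)
      (forall v, exists x, witness x v),
      (* (S5) *)
      (forall u s, mu u = inl s -> inner zS parS s ->
         forall v, v \in children parT u -> lt_el parS (mu v) (mu u)) &
      (* (S6) *)
      (forall u s, mu u = inl s -> inner zS parS s ->
         exists x y : L, [/\ lca zT parT (lf x) (lf y) = u,
                             witness (lf x) u, witness (lf y) u &
                             s = lca zS parS (mS (sigma x)) (mS (sigma y))])].

Definition explains (Glt Geq Ggt : rel L) : Prop :=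
  forall x y, x != y ->
    let a := tauT (lca zT parT (lf x) (lf y)) in
    let b := tauS (lca zS parS (mS (sigma x)) (mS (sigma y))) in
    [/\ Glt x y = (a < b), Geq x y = (a == b) & Ggt x y = (b < a)].

End Scenario.

Definition explainable_relaxed (R : realType) (L M : finType) (sigma : L -> M)
  (Glt Geq Ggt : rel L) : Prop :=
  exists (VT VS : finType) (zT : VT) (parT : VT -> VT) (zS : VS) (parS : VS -> VS)
         (tauT : VT -> R) (tauS : VS -> R) (lf : L -> VT) (mS : M -> VS)
         (mu : VT -> VS + VS),
    relaxed_scenario sigma zT parT zS parS tauT tauS lf mS mu /\
    explains sigma zT parT zS parS tauT tauS lf mS Glt Geq Ggt.

Definition explainable_restricted (R : realType) (L M : finType) (sigma : L -> M)
  (Glt Geq Ggt : rel L) : Prop :=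
  exists (VT VS : finType) (zT : VT) (parT : VT -> VT) (zS : VS) (parS : VS -> VS)
         (tauT : VT -> R) (tauS : VS -> R) (lf : L -> VT) (mS : M -> VS)
         (mu : VT -> VS + VS),
    restricted_scenario sigma zT parT zS parS tauT tauS lf mS mu /\
    explains sigma zT parT zS parS tauT tauS lf mS Glt Geq Ggt.

(* Main.v *)
Require Import Defs.
From mathcomp Require Import all_boot all_order all_algebra.
From mathcomp Require Import reals.
From mathcomp Require Import lra zify.
Set Implicit Arguments. Unset Strict Implicit. Unset Printing Implicit Defensive.
Import Order.TTheory GRing.Theory Num.Theory.
Local Open Scope ring_scope.

Section TreeLemmas.
Variables (V : finType) (z : V) (par : V -> V).
Hypothesis Hp : planted_phylo z par.

Lemma ancP x y : reflect (exists n, iter n par x = y) (anc par x y).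
Proof.
apply: (iffP idP).
  by move=> h; exists (findex par x y); apply: iter_findex.
by case=> n <-; apply: fconnect_iter.
Qed.

Lemma anc_refl x : anc par x x.
Proof. exact: connect0. Qed.

Lemma anc_trans x y w : anc par x y -> anc par y w -> anc par x w.
Proof. exact: connect_trans. Qed.

Lemma anc_par x : anc par x (par x).
Proof. by apply: connect1; rewrite /= eqxx. Qed.

Lemma par_z : par z = z.
Proof. by case: Hp. Qed.

Lemma anc_z x : anc par x z.
Proof. by case: Hp. Qed.

Lemma iter_z n : iter n par z = z.
Proof. by elim: n => //= n ->; rewrite par_z. Qed.

Lemma anc_total x u w : anc par x u -> anc par x w -> anc par u w || anc par w u.
Proof.
move=> /ancP [n <-] /ancP [m <-].
case: (leqP n m) => h.
  apply/orP; left; apply/ancP; exists (m - n)%N; rewrite -iterD subnK //.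
apply/orP; right; apply/ancP; exists (n - m)%N; rewrite -iterD subnK //; exact: ltnW.
Qed.

Lemma iter_fix x n : iter n par x = x -> (0 < n)%N -> x = z.
Proof.
move=> hx hn; have /ancP [k hk] := anc_z x.
have hm : forall j, iter (j * n) par x = x.
  by elim=> [|j IH] //=; rewrite mulSn iterD IH hx.
by rewrite -(hm k) -(subnK (leq_pmulr k hn)) iterD hk iter_z.
Qed.

Lemma anc_antisym x y : anc par x y -> anc par y x -> x = y.
Proof.
move=> /ancP [n hn] /ancP [m hm].
case: n hn => [|n] hn; first by [].
have : iter (m + n.+1) par x = x by rewrite iterD hn hm.
move=> /iter_fix; rewrite addnS ltn0Sn => /(_ isT) hx.
by rewrite -hn hx iter_z.
Qed.

Lemma anc_step x y : anc par x y -> x != y -> anc par (par x) y.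
Proof.
move=> /ancP [[|n] hn] hxy; first by rewrite -hn eqxx in hxy.
by apply/ancP; exists n; rewrite -iterSr.
Qed.

Lemma is_lca_ex x y : exists w, is_lca par x y w.
Proof.
pose P := fun w => anc par x w && anc par y w.
have P0 : P z by rewrite /P !anc_z.
case: (arg_maxnP (fun w => #|[set v | anc par w v]|) P0) => w /andP [hx hy] hmax.
exists w; rewrite /is_lca hx hy /=; apply/forallP => u; apply/implyP => /andP [hux huy].
case/orP: (anc_total hx hux) => // huw.
case: (eqVneq u w) => [->|hne]; first exact: anc_refl.
have := hmax u; rewrite /P hux huy => /(_ isT).
have hsub : [set v | anc par w v] \proper [set v | anc par u v].
  apply/properP; split.
    by apply/subsetP => v; rewrite !inE => hv; apply: anc_trans huw hv.
  exists u; rewrite !inE ?anc_refl //; apply/negP => hwu.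
  by move/eqP: hne; apply; apply: anc_antisym.
by move=> hle; have := proper_card hsub; rewrite ltnNge; move: hle => /= ->.
Qed.

Lemma lca_spec x y : is_lca par x y (lca z par x y).
Proof.
rewrite /lca; case: pickP => [w //|h].
by case: (is_lca_ex x y) => w hw; rewrite h in hw.
Qed.

Lemma lca_anc1 x y : anc par x (lca z par x y).
Proof. by case/and3P: (lca_spec x y). Qed.
Lemma lca_anc2 x y : anc par y (lca z par x y).
Proof. by case/and3P: (lca_spec x y). Qed.
Lemma lca_least x y u : anc par x u -> anc par y u -> anc par (lca z par x y) u.
Proof.
case/and3P: (lca_spec x y) => _ _ /forallP h hx hy.
by move: (h u); rewrite hx hy.
Qed.

Lemma lca_unique x y w : is_lca par x y w -> lca z par x y = w.
Proof.
case/and3P => hx hy /forallP h.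
apply: anc_antisym; first exact: lca_least.
by move: (h (lca z par x y)); rewrite lca_anc1 lca_anc2.
Qed.

Lemma lcaC x y : lca z par x y = lca z par y x.
Proof. by apply: lca_unique; rewrite /is_lca lca_anc1 lca_anc2 /=;
  apply/forallP => u; apply/implyP => /andP [h1 h2]; apply: lca_least. Qed.

Lemma lca_id x : lca z par x x = x.
Proof. by apply: lca_unique; rewrite /is_lca anc_refl /=;
  apply/forallP => u; apply/implyP => /andP []. Qed.

Lemma leaf_min v y : v \in leaves z par -> anc par y v -> y = v.
Proof.
rewrite inE => /andP [hvz /eqP hch] /ancP [n hn].
case: n hn => [//|n] hn.
exfalso.
set w := iter n par y.
have hpw : par w = v by rewrite /w -iterS.
case: (eqVneq w v) => hwv.
  have : iter 1 par v = v by rewrite /= -{1}hwv hpw.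
  by move/iter_fix => /(_ isT) hv; rewrite hv eqxx in hvz.
have : w \in children par v by rewrite inE hwv hpw eqxx.
by rewrite hch inE.
Qed.

Lemma rho_ex : exists rho, rho != z /\ forall v, v != z -> anc par v rho.
Proof.
case: Hp => _ _ /eqP hc _.
case/cards1P: hc => rho hrho.
have : rho \in children par z by rewrite hrho inE.
rewrite inE => /andP [hrz /eqP hpr].
exists rho; split => // v hv.
have ex : exists n, iter n par v == z by case/ancP: (anc_z v) => n hn; exists n; apply/eqP.
case: (ex_minnP ex) => n /eqP hn hmin.
case: n hn hmin => [|n] hn hmin; first by move: hn => /= hn; rewrite hn eqxx in hv.
set w := iter n par v.
have hw : par w = z by rewrite /w -iterS.
have hwz : w != z.
  apply/negP => /eqP hw'; have := hmin n; rewrite /w in hw'; rewrite hw' eqxx => /(_ isT).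
  by rewrite ltnn.
have : w \in children par z by rewrite inE hwz hw eqxx.
rewrite hrho inE => /eqP <-; apply/ancP; exists n => //.
Qed.

Lemma lca_ne_z x y : x != z -> y != z -> lca z par x y != z.
Proof.
move=> hx hy; case: rho_ex => rho [hrz hr].
have h := lca_least (hr x hx) (hr y hy).
apply/negP => /eqP he; rewrite he in h.
have : rho = z by apply: anc_antisym => //; exact: anc_z.
by move/eqP; rewrite (negbTE hrz).
Qed.

Variable R : realType.
Variable tau : V -> R.
Hypothesis Ht : time_map par tau.

Lemma tau_lt x y : anc par x y -> x != y -> tau x < tau y.
Proof. exact: Ht. Qed.

Lemma tau_le x y : anc par x y -> tau x <= tau y.
Proof. by move=> h; case: (eqVneq x y) => [->//|hne]; apply: ltW; apply: Ht. Qed.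

Lemma anc_of_tau x u w : anc par x u -> anc par x w -> tau u <= tau w -> anc par u w.
Proof.
move=> hu hw hle; case/orP: (anc_total hu hw) => // hwu.
case: (eqVneq w u) => [->|hne]; first exact: anc_refl.
by have := Ht hwu hne; rewrite ltNge hle.
Qed.

Lemma anc_tau_eq x u w : anc par x u -> anc par x w -> tau u = tau w -> u = w.
Proof.
move=> hu hw he; apply: anc_antisym; apply: anc_of_tau; eauto; by rewrite he.
Qed.

Lemma lca_ultra x y w :
  tau (lca z par x w) <= Num.max (tau (lca z par x y)) (tau (lca z par y w)).
Proof.
set u := lca z par x y; set v := lca z par y w.
case/orP: (anc_total (lca_anc2 x y) (lca_anc1 y w)) => h.
  have : anc par (lca z par x w) v.
    apply: lca_least; last exact: lca_anc2.
    exact: anc_trans (lca_anc1 x y) h.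
  by move/tau_le => h2; rewrite le_max h2 orbT.
have : anc par (lca z par x w) u.
  apply: lca_least; first exact: lca_anc1.
  exact: anc_trans (lca_anc2 y w) h.
by move/tau_le => h2; rewrite le_max h2.
Qed.

Lemma tau_lca_ltz x y : x != z -> y != z -> tau (lca z par x y) < tau z.
Proof. by move=> hx hy; apply: Ht; [exact: anc_z| exact: lca_ne_z]. Qed.

Lemma leaf_lca_lt v y : v \in leaves z par -> y != v -> tau v < tau (lca z par v y).
Proof.
move=> hv hyv; apply: Ht; first exact: lca_anc1.
apply/negP => /eqP he.
have := lca_anc2 v y; rewrite -he => /(leaf_min hv) h.
by rewrite h eqxx in hyv.
Qed.

End TreeLemmas.

Section LeafEx.
Variables (V : finType) (z : V) (par : V -> V).
Hypothesis Hp : planted_phylo z par.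

Lemma leaf_ex : exists v, v \in leaves z par.
Proof.
case: (rho_ex Hp) => rho [hrz _].
pose P := fun v => v != z.
have P0 : P rho by [].
case: (arg_maxnP (fun v => #|[set u | anc par v u]|) P0) => v hvz hmax.
have hvz' : v != z := hvz.
exists v; rewrite inE hvz' /=; apply/eqP; apply/setP => w; rewrite !inE.
apply/negP => /andP [hwv /eqP hpw].
have hwz : w != z.
  apply/negP => /eqP e; move: hpw; rewrite e (par_z Hp) => e'.
  by rewrite -e' eqxx in hvz'.
have := hmax w hwz.
have hanc : anc par w v by rewrite -hpw; exact: anc_par.
have hsub : [set u | anc par v u] \proper [set u | anc par w u].
  apply/properP; split.
    by apply/subsetP => u; rewrite !inE => hu; apply: anc_trans hanc hu.
  exists w; rewrite !inE ?anc_refl //; apply/negP => hvw.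
  by move/negP: hwv; apply; apply/eqP; apply: (anc_antisym Hp).
by move=> hle; have := proper_card hsub; rewrite ltnNge; move: hle => /= ->.
Qed.
End LeafEx.

Lemma argmx (R : realType) (T : finType) (f : T -> R) (t0 : T) :
  exists t, forall u, f u <= f t.
Proof.
case: (@arg_maxP _ _ T t0 predT f isT) => t _ h. by exists t => u; apply: h.
Qed.

Definition ultra_hyp (R : realType) (L : finType) (c : L -> L -> R) :=
  [/\ (forall x y, c x y = c y x), (forall x y w, c x w <= Num.max (c x y) (c y w)) &
      (forall x y, x != y -> c x x < c x y)].

Section Clusters.
Variables (R : realType) (L : finType) (c : L -> L -> R).
Hypothesis Hc : ultra_hyp c.
Let csym : forall x y, c x y = c y x. Proof. by case: Hc. Qed.
Let cultra : forall x y w, c x w <= Num.max (c x y) (c y w). Proof. by case: Hc. Qed.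
Let cdiag : forall x y, x != y -> c x x < c x y. Proof. by case: Hc. Qed.

Lemma cdiag_le x y : c x x <= c x y.
Proof. by case: (eqVneq x y) => [->//|h]; apply: ltW; apply: cdiag. Qed.

Definition ball x r : {set L} := [set y | c x y <= r].
Definition cluster (A : {set L}) : bool := [exists x, exists y, A == ball x (c x y)].

Lemma ball_same x y r : y \in ball x r -> ball y r = ball x r.
Proof.
rewrite inE => hxy; apply/setP => w; rewrite !inE.
apply/idP/idP => h.
  by apply: le_trans (cultra x y w) _; rewrite ge_max hxy.
by apply: le_trans (cultra y x w) _; rewrite ge_max csym hxy.
Qed.

Lemma ball_sub x r r' : r <= r' -> ball x r \subset ball x r'.
Proof. by move=> h; apply/subsetP => y; rewrite !inE => h'; apply: le_trans h' h. Qed.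

Lemma clusterP A : reflect (exists x y, A = ball x (c x y)) (cluster A).
Proof.
apply: (iffP existsP) => [[x /existsP [y /eqP h]]|[x [y h]]]; first by exists x, y.
by exists x; apply/existsP; exists y; rewrite h.
Qed.

Lemma ball_c1 x y : x \in ball x (c x y).
Proof. by rewrite inE cdiag_le. Qed.
Lemma ball_c2 x y : y \in ball x (c x y).
Proof. by rewrite inE. Qed.

Lemma ball_diam x r u v : u \in ball x r -> v \in ball x r -> c u v <= r.
Proof.
rewrite !inE => hu hv; apply: le_trans (cultra u x v) _.
by rewrite ge_max csym hu hv.
Qed.

Definition d (A : {set L}) : R :=
  if [pick p : L * L | A == ball p.1 (c p.1 p.2)] is Some p then c p.1 p.2 else 0.

Lemma dE A x y : A = ball x (c x y) -> d A = c x y.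
Proof.
move=> hA; rewrite /d; case: pickP => [[p q] /= /eqP hp|h]; last first.
  by have := h (x, y); rewrite /= hA eqxx.
apply/eqP; rewrite eq_le; apply/andP; split.
  by apply: (ball_diam (x := x)); rewrite -hA hp ?ball_c1 ?ball_c2.
by apply: (ball_diam (x := p)); rewrite -hp hA ?ball_c1 ?ball_c2.
Qed.

Lemma cluster_n0 A : cluster A -> exists x, x \in A.
Proof. by case/clusterP => x [y ->]; exists x; apply: ball_c1. Qed.

Lemma cluster_ballE A x : cluster A -> x \in A -> A = ball x (d A).
Proof.
case/clusterP => p [q hA] hx; rewrite (dE hA) hA; apply/esym/ball_same.
by rewrite -hA.
Qed.

Lemma d_ge A u v : cluster A -> u \in A -> v \in A -> c u v <= d A.
Proof.
move=> hA hu hv; have := cluster_ballE hA hu => e.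
by apply: (ball_diam (x := u)); rewrite -e.
Qed.

Lemma d_att A : cluster A -> exists u v, [/\ u \in A, v \in A & c u v = d A].
Proof.
case/clusterP => x [y hA]; exists x, y; rewrite (dE hA) hA ball_c1 ball_c2; split => //.
Qed.

Lemma clusters_nested A B x : cluster A -> cluster B -> x \in A -> x \in B ->
  (A \subset B) || (B \subset A).
Proof.
move=> hA hB hxA hxB; rewrite (cluster_ballE hA hxA) (cluster_ballE hB hxB).
case: (lerP (d A) (d B)) => h; first by rewrite ball_sub.
by rewrite (ball_sub _ (ltW h)) orbT.
Qed.

Lemma d_mono A B : cluster A -> cluster B -> A \subset B -> d A <= d B.
Proof.
move=> hA hB hs; case: (d_att hA) => u [v [hu hv <-]].
by apply: d_ge => //; apply: (subsetP hs).
Qed.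

Lemma d_strict A B : cluster A -> cluster B -> A \proper B -> d A < d B.
Proof.
move=> hA hB /properP [hs [w hwB hwA]].
case: (cluster_n0 hA) => x hx.
rewrite ltNge; apply/negP => hle.
have hxB := subsetP hs x hx.
have : B \subset A.
  by rewrite (cluster_ballE hA hx) (cluster_ballE hB hxB) ball_sub.
by move/subsetP/(_ w hwB); rewrite (negbTE hwA).
Qed.

Lemma set1_ball x : [set x] = ball x (c x x).
Proof.
apply/setP => y; rewrite !inE; case: (eqVneq y x) => [->|h]; first by rewrite lexx.
by rewrite leNgt cdiag // eq_sym.
Qed.

Lemma cluster1 x : cluster [set x].
Proof. by apply/clusterP; exists x, x; apply: set1_ball. Qed.

Lemma d1 x : d [set x] = c x x.
Proof. by rewrite (dE (set1_ball x)). Qed.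

Variable l0 : L.

Lemma clusterT : cluster setT.
Proof.
case: (argmx (c l0) l0) => y hy; apply/clusterP; exists l0, y.
by apply/setP => w; rewrite !inE hy.
Qed.

Definition psup (A B : {set L}) := cluster B && (A \proper B).

Definition pars (A : {set L}) : option {set L} :=
  [pick B | psup A B && [forall B', psup A B' ==> (B \subset B')]].

Lemma pars_spec A B : pars A = Some B ->
  [/\ cluster B, A \proper B & forall B', cluster B' -> A \proper B' -> B \subset B'].
Proof.
rewrite /pars; case: pickP => // B' /andP [/andP [h1 h2] /forallP h3] [<-].
split => // B'' h4 h5; by move: (h3 B''); rewrite /psup h4 h5.
Qed.

Lemma pars_ex A : cluster A -> A != setT -> exists B, pars A = Some B.
Proof.
move=> hA hAT.
have p0 : psup A setT by rewrite /psup clusterT properT.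
case: (arg_minnP (fun B : {set L} => #|B|) p0) => B0 hB0 hmin.
rewrite /pars; case: pickP => [B _|h]; first by exists B.
exfalso; move: (h B0); rewrite hB0 /=; move/negP; apply; apply/forallP => B'.
apply/implyP => hB'.
case/andP: hB0 => hcB0 /properP [hsB0 _].
case/andP: (hB') => hcB' /properP [hsB' _].
case: (cluster_n0 hA) => x hx.
case/orP: (clusters_nested hcB0 hcB' (subsetP hsB0 x hx) (subsetP hsB' x hx)) => // hs.
have := hmin B' hB'.
case: (eqVneq B' B0) => [->|hne] hle; first exact: subxx.
have hp : B' \proper B0 by rewrite properEneq hne hs.
by move: (proper_card hp); rewrite ltnNge hle.
Qed.

Lemma parsT : pars setT = None.
Proof.
rewrite /pars; case: pickP => // B /andP [/andP [_ h] _].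
by move: h; rewrite properE subsetT andbF.
Qed.

Lemma pars_None A : cluster A -> pars A = None -> A = setT.
Proof.
move=> hA h; apply/eqP; apply/negPn/negP => hAT.
by case: (pars_ex hA hAT) => B; rewrite h.
Qed.

Lemma in_kid A C B x : pars C = Some A -> cluster C -> cluster B ->
  x \in B -> x \in C -> B \proper A -> B \subset C.
Proof.
move=> hp hC hB hxB hxC hBA.
case/pars_spec: hp => hA hCA hmin.
case/orP: (clusters_nested hB hC hxB hxC) => // hCB.
case: (eqVneq C B) => [->|hne]; first exact: subxx.
have : C \proper B by rewrite properEneq hne hCB.
move/(hmin B hB) => hAB.
by move: hBA; rewrite properE hAB andbF.
Qed.

Lemma kid_eq A C1 C2 x : pars C1 = Some A -> pars C2 = Some A -> cluster C1 -> cluster C2 ->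
  x \in C1 -> x \in C2 -> C1 = C2.
Proof.
move=> h1 h2 hc1 hc2 hx1 hx2.
have hp1 : C1 \proper A by case/pars_spec: h1.
have hp2 : C2 \proper A by case/pars_spec: h2.
apply/eqP; rewrite eqEsubset (in_kid h2 hc2 hc1 hx1 hx2 hp1) (in_kid h1 hc1 hc2 hx2 hx1 hp2) //.
Qed.

Lemma kid_ex A x : cluster A -> x \in A -> (1 < #|A|)%N ->
  exists C, [/\ cluster C, pars C = Some A & x \in C].
Proof.
move=> hA hx hc.
pose P := fun C => [&& cluster C, x \in C & C \proper A].
have P0 : P [set x].
  rewrite /P cluster1 set11 /= properEcard sub1set hx /=; by rewrite cards1.
case: (arg_maxnP (fun C : {set L} => #|C|) P0) => C /and3P [hcC hxC hCA] hmax.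
have hCT : C != setT.
  by apply/negP => /eqP hT; move: hCA; rewrite hT properE subsetT andbF.
case: (pars_ex hcC hCT) => B hB; exists C; split => //.
case/pars_spec: (hB) => hcB hCB hmin.
have hBA := hmin A hA hCA.
rewrite hB; case: (eqVneq B A) => [->//|hne].
have hBA' : B \proper A by rewrite properEneq hne hBA.
have := hmax B; rewrite /P hcB hBA' (subsetP (proper_sub hCB) x hxC) /= => /(_ isT).
by rewrite leqNgt (proper_card hCB).
Qed.

Definition VC := {A : {set L} | cluster A}.
Definition VTc := option VC.
Definition node (A : {set L}) : VTc := insub A.
Definition parC (v : VTc) : VTc :=
  if v is Some A then obind (fun B => insub B) (pars (val A)) else None.

Lemma nodeK (A : VC) : node (val A) = Some A.
Proof. by rewrite /node valK. Qed.

Lemma node_val A : cluster A -> exists a : VC, node A = Some a /\ val a = A.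
Proof. by move=> h; rewrite /node insubT /=; eexists; split. Qed.

Lemma parC_some (A : VC) B : pars (val A) = Some B -> parC (Some A) = node B.
Proof. by move=> h; rewrite /= h. Qed.

Lemma parC_none (A : VC) : val A = setT -> parC (Some A) = None.
Proof. by move=> h; rewrite /= h parsT. Qed.

Lemma iterC_None n : iter n parC None = None.
Proof. by elim: n => //= n ->. Qed.

Lemma anc_sub (A B : VC) : anc parC (Some A) (Some B) -> val A \subset val B.
Proof.
move=> /(ancP parC) [n]; elim: n A => [|n IH] A.
  by move=> /= [->]; apply: subxx.
rewrite iterSr; case hp: (pars (val A)) => [P|]; last first.
  by rewrite /= hp iterC_None.
have [p [hp' hpv]] := node_val (proj1 (and3_rec (fun a b c => conj a (conj b c)) (pars_spec hp))).
rewrite (parC_some hp) hp' => /IH.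
case/pars_spec: hp => _ hAP _.
rewrite hpv => h; apply: subset_trans h; exact: proper_sub.
Qed.

Lemma setC0_T (A : {set L}) : (#|~: A| <= 0)%N -> A = setT.
Proof.
move=> h; have e : ~: A = set0 by apply/eqP; rewrite -cards_eq0 -leqn0.
by rewrite -(setCK A) e setC0.
Qed.

Lemma sub_anc_aux n (A B : VC) : (#|~: val A| <= n)%N -> val A \subset val B ->
  anc parC (Some A) (Some B).
Proof.
elim: n A => [|n IH] A Hn hs.
  have hT : val A = setT by apply: setC0_T.
  have hB : val B = setT by apply/eqP; rewrite eqEsubset subsetT -hT hs.
  have -> : A = B by apply: val_inj; rewrite hT hB.
  exact: anc_refl.
case: (eqVneq (val A) (val B)) => [e|hne].
  have -> : A = B by apply: val_inj.
  exact: anc_refl.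
have hAT : val A != setT.
  apply/negP => /eqP hT; move/negP: hne; apply; rewrite eqEsubset hs hT subsetT //.
case: (pars_ex (valP A) hAT) => P hP.
case/pars_spec: (hP) => hcP hAP hmin.
have hPB : P \subset val B by apply: hmin; rewrite ?(valP B) // properEneq hne hs.
have [p [hp hpv]] := node_val hcP.
apply: (anc_trans (y := Some p)).
  by rewrite -hp -(parC_some hP); apply: anc_par.
apply: IH; last by rewrite hpv.
rewrite hpv; have : ~: P \proper ~: val A by rewrite properC.
move/proper_card => h; rewrite -ltnS; exact: leq_trans h Hn.
Qed.

Lemma sub_anc (A B : VC) : val A \subset val B -> anc parC (Some A) (Some B).
Proof. exact: sub_anc_aux. Qed.

Lemma anc_None_aux n (A : VC) : (#|~: val A| <= n)%N -> anc parC (Some A) None.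
Proof.
elim: n A => [|n IH] A Hn.
  have hT : val A = setT by apply: setC0_T.
  by rewrite -(parC_none hT); apply: anc_par.
case: (eqVneq (val A) setT) => [hT|hAT].
  by rewrite -(parC_none hT); apply: anc_par.
case: (pars_ex (valP A) hAT) => P hP.
case/pars_spec: (hP) => hcP hAP hmin.
have [p [hp hpv]] := node_val hcP.
apply: (anc_trans (y := Some p)).
  by rewrite -hp -(parC_some hP); apply: anc_par.
apply: IH; rewrite hpv; have : ~: P \proper ~: val A by rewrite properC.
move/proper_card => h; rewrite -ltnS; exact: leq_trans h Hn.
Qed.

Lemma anc_None v : anc parC v None.
Proof. case: v => [A|]; [exact: anc_None_aux (leqnn _) | exact: anc_refl]. Qed.


Lemma anc_None_Some (A : VC) : ~~ anc parC None (Some A).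
Proof. by apply/negP => /(ancP parC) [n]; rewrite iterC_None. Qed.

Lemma anc_SomeE v (A : VC) : anc parC v (Some A) -> exists B : VC, v = Some B /\ val B \subset val A.
Proof.
case: v => [B|] h; last by rewrite (negbTE (anc_None_Some A)) in h.
by exists B; split => //; apply: anc_sub.
Qed.

Lemma parC_cases (A : VC) :
  (val A = setT /\ parC (Some A) = None) \/
  exists P : VC, [/\ parC (Some A) = Some P, pars (val A) = Some (val P) & val A \proper val P].
Proof.
case hp: (pars (val A)) => [P|].
  have hs := pars_spec hp; case: hs => hcP hAP _.
  have [p [hp' hpv]] := node_val hcP.
  by right; exists p; rewrite (parC_some hp) hp' hpv.
by left; have h := pars_None (valP A) hp; split => //; apply: parC_none.
Qed.

Lemma childrenC (A C : VC) : (Some C \in children parC (Some A)) = (pars (val C) == Some (val A)).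
Proof.
rewrite inE; case: (parC_cases C) => [[hT ->]|[P [-> hp hs]]].
  by rewrite /= andbF hT parsT.
rewrite hp; apply/idP/idP.
  by move=> /andP [_ /eqP [->]].
move=> /eqP [e]; have eP : P = A by apply: val_inj.
subst P; rewrite eqxx andbT; apply/negP => /eqP [e']; move: hs; by rewrite e' properxx.
Qed.

Lemma None_notin_children v : None \notin children parC v.
Proof. by rewrite inE /= andbC; case: v. Qed.

Lemma leafC (A : VC) : (Some A \in leaves None parC) = (#|val A| == 1%N).
Proof.
rewrite inE /=; apply/eqP/eqP => h.
  case: (cluster_n0 (valP A)) => x hx.
  apply/eqP; rewrite eqn_leq card_gt0; apply/andP; split; last by apply/set0Pn; exists x.
  rewrite leqNgt; apply/negP => hc.
  case: (kid_ex (valP A) hx hc) => C [hC hp _].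
  have [cc [hcc hccv]] := node_val hC.
  have : Some cc \in children parC (Some A) by rewrite childrenC hccv hp.
  by rewrite h inE.
apply/eqP; rewrite -subset0; apply/subsetP => v hv; exfalso.
case: v hv => [C|] hv; last by rewrite (negbTE (None_notin_children _)) in hv.
rewrite childrenC in hv; case/pars_spec: (eqP hv) => _ /proper_card hc _.
case: (cluster_n0 (valP C)) => x hx.
by move: hc; rewrite h ltnS leqn0 cards_eq0 => /eqP e; rewrite e inE in hx.
Qed.

Definition topC : VC := exist _ setT clusterT.

Lemma plantedC : planted_phylo None parC.
Proof.
split => //.
- exact: anc_None.
- apply/eqP/cards1P; exists (Some topC); apply/setP => v; rewrite !inE.
  case: v => [A|]; last by [].
  case: (parC_cases A) => [[hT ->]|[P [-> hp hs]]].
    by rewrite eqxx; apply/esym/eqP; congr Some; apply: val_inj.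
  rewrite andbF; apply/esym/negP => /eqP [e]; move: hs; rewrite e /= properE subsetT andbF.
  by [].
- move=> [A|] // _; rewrite leafC => hA.
  case: (cluster_n0 (valP A)) => x hx.
  have hc : (1 < #|val A|)%N.
    by rewrite ltn_neqAle eq_sym hA card_gt0; apply/set0Pn; exists x.
  case: (kid_ex (valP A) hx hc) => C1 [hC1 hp1 hx1].
  have : val A \proper C1 = false.
    by apply/negP => /proper_card; rewrite ltnNge subset_leq_card //; case/pars_spec: hp1 => _ /proper_sub.
  have hC1A : C1 \proper val A by case/pars_spec: hp1.
  case/properP: (hC1A) => _ [w hwA hwC1] _.
  have hc' : (1 < #|val A|)%N by [].
  case: (kid_ex (valP A) hwA hc') => C2 [hC2 hp2 hw2].
  have [c1 [hc1 hc1v]] := node_val hC1.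
  have [c2 [hc2 hc2v]] := node_val hC2.
  have hne : Some c1 != Some c2.
    apply/negP => /eqP [e]; move/negP: hwC1; apply; by rewrite -hc1v e hc2v.
  have hsub : [set Some c1; Some c2] \subset children parC (Some A).
    apply/subsetP => v /set2P [] ->; rewrite childrenC ?hc1v ?hc2v ?hp1 ?hp2 //.
  by move: (subset_leq_card hsub); rewrite cards2 hne.
Qed.

Lemma lcaC_leaf x y : lca None parC (node [set x]) (node [set y]) = node (ball x (c x y)).
Proof.
have [a [ha hav]] := node_val (cluster1 x).
have [b [hb hbv]] := node_val (cluster1 y).
have hcl : cluster (ball x (c x y)) by apply/clusterP; exists x, y.
have [w [hw hwv]] := node_val hcl.
rewrite ha hb hw; apply: lca_unique; first exact: plantedC.
rewrite /is_lca !sub_anc ?hav ?hbv ?hwv ?sub1set ?ball_c1 ?ball_c2 //=.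
apply/forallP => u; apply/implyP => /andP [h1 h2].
case: u h1 h2 => [B|] h1 h2; last exact: anc_None.
apply: sub_anc; move: (anc_sub h1) (anc_sub h2); rewrite hav hbv hwv !sub1set => hxB hyB.
rewrite (cluster_ballE (valP B) hxB) ball_sub //.
exact: d_ge (valP B) hxB hyB.
Qed.

Variables (top : R) (f : {set L} -> R).
Hypothesis hf1 : forall A B, cluster A -> cluster B -> A \proper B -> d A + f A < d B + f B.
Hypothesis hf2 : forall A, cluster A -> d A + f A < top.

Definition tauC (v : VTc) : R := if v is Some A then d (val A) + f (val A) else top.

Lemma time_mapC : time_map parC tauC.
Proof.
move=> u v h hne.
case: v h hne => [B|] h hne.
  case: (anc_SomeE h) => A [e hs]; subst u.
  apply: hf1; rewrite ?(valP A) ?(valP B) // properEneq hs andbT.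
  apply/negP => /eqP e; move/negP: hne; apply; apply/eqP; congr Some; exact: val_inj.
case: u h hne => [A|] // _ _; exact: hf2 (valP A).
Qed.

End Clusters.

Section Lineage.
Variables (R : realType) (VS : finType) (zS : VS) (parS : VS -> VS) (tauS : VS -> R).
Hypothesis HpS : planted_phylo zS parS.
Hypothesis HtS : time_map parS tauS.

Definition lin (t : R) (m : VS) : VS + VS :=
  if [pick s | anc parS m s && (tauS s == t)] is Some s then inl s
  else if [pick v | [&& anc parS m v, v != zS, tauS v < t & t < tauS (parS v)]] is Some v
  then inr v else inl zS.

Lemma lin_vertex m s : anc parS m s -> lin (tauS s) m = inl s.
Proof.
move=> h; rewrite /lin; case: pickP => [s' /andP [h1 /eqP h2]|hn].
  by congr inl; apply: (anc_tau_eq HpS HtS h1 h).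
by have := hn s; rewrite h eqxx.
Qed.

Lemma lin_cases m t : tauS m <= t -> t < tauS zS ->
  (exists s, [/\ lin t m = inl s, anc parS m s & tauS s = t]) \/
  (exists v, [/\ lin t m = inr v, anc parS m v, v != zS, tauS v < t & t < tauS (parS v)]).
Proof.
move=> h1 h2; rewrite /lin; case: pickP => [s /andP [hs /eqP ht]|hn].
  by left; exists s.
case: pickP => [v /and4P [hv hvz hvt htv]|hn2].
  by right; exists v.
exfalso.
pose P := fun v => anc parS m v && (tauS v <= t).
have P0 : P m by rewrite /P anc_refl h1.
case: (@arg_maxP _ _ VS m P tauS P0) => v /andP [hv hvt] hmax.
have hvz : v != zS by apply/negP => /eqP e; move: hvt; rewrite e leNgt h2.
have hvt' : tauS v < t.
  rewrite lt_neqAle hvt andbT; apply/negP => /eqP e.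
  by have := hn v; rewrite hv e eqxx.
have hpv : anc parS m (parS v) := anc_trans hv (anc_par parS v).
have htp : t < tauS (parS v).
  rewrite ltNge; apply/negP => hle.
  have hne' : v != parS v.
    apply/negP => /eqP e.
    have : iter 1 parS v = v by rewrite /= -e.
    by move/(iter_fix HpS) => /(_ isT) e'; rewrite e' eqxx in hvz.
  have hlt : tauS v < tauS (parS v) by apply: HtS => //; exact: anc_par.
  have := hmax (parS v); rewrite /P hpv hle => /(_ isT) hge.
  by move: hlt; rewrite ltNge => /negP; apply; exact: hge.
by have := hn2 v; rewrite hv hvz hvt' htp.
Qed.

Lemma lin_le_anc m t s : tauS m <= t -> t < tauS zS -> anc parS m s -> t <= tauS s ->
  le_el parS (lin t m) (inl s).
Proof.
move=> h1 h2 hs hts.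
case: (lin_cases h1 h2) => [[s1 [-> hs1 ht1]]|[v [-> hv hvz hvt htv]]] /=.
  by apply: (anc_of_tau HtS hs1 hs); rewrite ht1.
case/orP: (anc_total hv hs) => hvs.
  case: (eqVneq v s) => [e|hne]; first by subst v; move: hvt; rewrite ltNge hts.
  exact: anc_step.
exfalso; have := tau_le HtS hvs; rewrite leNgt.
by move/negP; apply; exact: lt_le_trans hvt hts.
Qed.

Lemma lin_lt_anc m t s : tauS m <= t -> t < tauS zS -> anc parS m s -> t < tauS s ->
  lt_el parS (lin t m) (inl s).
Proof.
move=> h1 h2 hs hts; rewrite /lt_el; apply/andP; split.
  by apply: lin_le_anc => //; exact: ltW.
case: (lin_cases h1 h2) => [[s1 [-> hs1 ht1]]|[v [-> hv hvz hvt htv]]] //.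
by apply/negP => /eqP [e]; move: hts; rewrite -e ht1 ltxx.
Qed.

Lemma lin_mono m t1 t2 : tauS m <= t1 -> t1 <= t2 -> t2 < tauS zS ->
  le_el parS (lin t1 m) (lin t2 m).
Proof.
move=> h1 h12 h2.
have h1' : tauS m <= t2 by apply: le_trans h12.
have h2' : t1 < tauS zS by apply: le_lt_trans h2.
case: (lin_cases h1' h2) => [[s2 [-> hs2 ht2]]|[v2 [-> hv2 hvz2 hvt2 htv2]]].
  by apply: lin_le_anc => //; rewrite ht2.
case: (lin_cases h1 h2') => [[s1 [-> hs1 ht1]]|[v1 [-> hv1 hvz1 hvt1 htv1]]] /=.
  case/orP: (anc_total hs1 hv2) => // h.
  case: (eqVneq v2 s1) => [->|hne]; first exact: anc_refl.
  exfalso; have := tau_le HtS (anc_step h hne); rewrite leNgt => /negP; apply.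
  by rewrite ht1; apply: le_lt_trans htv2.
case/orP: (anc_total hv1 hv2) => // h.
case: (eqVneq v2 v1) => [->|hne]; first exact: anc_refl.
exfalso; have := tau_le HtS (anc_step h hne); rewrite leNgt => /negP; apply.
by apply: lt_trans htv2; apply: lt_le_trans hvt1 h12.
Qed.

Lemma lin_le_z m t : tauS m <= t -> t < tauS zS -> le_el parS (lin t m) (inl zS).
Proof.
move=> h1 h2; case: (lin_cases h1 h2) => [[s1 [-> _ _]]|[v1 [-> _ _ _ _]]] /=;
  exact: (anc_z HpS).
Qed.

End Lineage.

Lemma gap1 (R : realType) (x : R) (s : seq R) :
  exists e, 0 < e /\ forall y, y \in s -> x < y -> x + e <= y.
Proof.
elim: s => [|y0 s [e [he H]]]; first by exists 1; split => //.
case: (ltrP x y0) => hxy.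
  exists (Num.min e (y0 - x)); split; first by rewrite lt_min he subr_gt0.
  move=> y; rewrite inE => /orP [/eqP ->|hy] hxy'.
    have : Num.min e (y0 - x) <= y0 - x by rewrite ge_min lexx orbT.
    lra.
  have := H y hy hxy'; have : Num.min e (y0 - x) <= e by rewrite ge_min lexx.
  lra.
exists e; split => // y; rewrite inE => /orP [/eqP ->|hy] hxy'; last exact: H.
by move: hxy'; rewrite ltNge hxy.
Qed.

Lemma gap_ex (R : realType) (s : seq R) :
  exists delta, 0 < delta /\ forall u v, u \in s -> v \in s -> u < v -> u + delta <= v.
Proof.
elim: s => [|x s [d0 [hd0 H]]]; first by exists 1; split.
case: (gap1 x s) => e [he He].
have gap2 : exists e', 0 < e' /\ forall y, y \in s -> y < x -> y + e' <= x.
  clear; elim: s => [|y0 s [e [he H]]]; first by exists 1; split => //.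
  case: (ltrP y0 x) => hxy.
    exists (Num.min e (x - y0)); split; first by rewrite lt_min he subr_gt0.
    move=> y; rewrite inE => /orP [/eqP ->|hy] hxy'.
      have : Num.min e (x - y0) <= x - y0 by rewrite ge_min lexx orbT.
      lra.
    have := H y hy hxy'; have : Num.min e (x - y0) <= e by rewrite ge_min lexx.
    lra.
  exists e; split => // y; rewrite inE => /orP [/eqP ->|hy] hxy'; last exact: H.
  by move: hxy'; rewrite ltNge hxy.
case: gap2 => e' [he' He'].
exists (Num.min d0 (Num.min e e')); split.
  by rewrite !lt_min hd0 he he'.
have m1 : Num.min d0 (Num.min e e') <= d0 by rewrite ge_min lexx.
have m2 : Num.min d0 (Num.min e e') <= e by rewrite !ge_min lexx !orbT.
have m3 : Num.min d0 (Num.min e e') <= e' by rewrite !ge_min lexx !orbT.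
move=> u v; rewrite !inE => /orP [/eqP ->|hu] /orP [/eqP ->|hv] huv.
- by move: huv; rewrite ltxx.
- have := He v hv huv; lra.
- have := He' u hu huv; lra.
- have := H u v hu hv huv; lra.
Qed.

Section Main.
Variables (R : realType) (L M : finType) (sigma : L -> M).
Variables (VT VS : finType) (zT : VT) (parT : VT -> VT) (zS : VS) (parS : VS -> VS).
Variables (tauT : VT -> R) (tauS : VS -> R) (lf : L -> VT) (mS : M -> VS) (mu : VT -> VS + VS).
Hypothesis Hrel : relaxed_scenario sigma zT parT zS parS tauT tauS lf mS mu.
Variable delta : R.
Hypothesis Hdelta : 0 < delta.
Definition isV (u : R) := (exists v, u = tauT v) \/ (exists s, u = tauS s).
Hypothesis Hgap : forall u v, isV u -> isV v -> u < v -> u + delta <= v.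
Variable l0 : L.

Let HpT : planted_phylo zT parT. Proof. by case: Hrel => [[h _ _ _] _]. Qed.
Let HpS : planted_phylo zS parS. Proof. by case: Hrel => [[_ h _ _] _]. Qed.
Let HtT : time_map parT tauT. Proof. by case: Hrel => [[_ _ h _] _]. Qed.
Let HtS : time_map parS tauS. Proof. by case: Hrel => [[_ _ _ h] _]. Qed.
Let lf_inj : injective lf. Proof. by case: Hrel => _ [[[h _] _ _] _]. Qed.
Let lf_leaf l : lf l \in leaves zT parT.
Proof. by case: Hrel => _ [[[_ h] _ _] _]; apply/(h (lf l)); exists l. Qed.
Let mS_leaf m : mS m \in leaves zS parS.
Proof. by case: Hrel => _ [[_ [_ h] _] _]. Qed.
Let mu_lf l : mu (lf l) = inl (mS (sigma l)).
Proof. by case: Hrel => _ [_ [_ [_ h] _ _]]. Qed.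
Let S2 x s : mu x = inl s -> tauS s = tauT x.
Proof. by case: Hrel => _ [_ [_ _ h _]]; apply: h. Qed.
Let mu_zT : mu zT = inl zS.
Proof. by case: Hrel => _ [_ [h _ _ _]]; apply/h. Qed.

Lemma tau_top : tauT zT = tauS zS.
Proof. by rewrite (S2 mu_zT). Qed.
Lemma tau_leaf l : tauT (lf l) = tauS (mS (sigma l)).
Proof. by rewrite (S2 (mu_lf l)). Qed.

Lemma leaf_ne (V : finType) (z : V) (p : V -> V) v : v \in leaves z p -> v != z.
Proof. by rewrite inE => /andP []. Qed.

Definition a x y := tauT (lca zT parT (lf x) (lf y)).
Definition b x y := tauS (lca zS parS (mS (sigma x)) (mS (sigma y))).
Definition eps := delta / 2.
Definition eta := delta / 4.
Definition cc x y := Num.max (a x y) (b x y - eps).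

Lemma eps_pos : 0 < eps. Proof. have := Hdelta; rewrite /eps; lra. Qed.
Lemma eta_pos : 0 < eta. Proof. have := Hdelta; rewrite /eta; lra. Qed.
Lemma eta_eps : eta < eps. Proof. have := Hdelta; rewrite /eta /eps; lra. Qed.
Lemma eps_delta : eps < delta. Proof. have := Hdelta; rewrite /eps; lra. Qed.
Lemma eps_half : eps = delta / 2. Proof. by []. Qed.

Lemma a_sym x y : a x y = a y x. Proof. by rewrite /a lcaC. Qed.
Lemma b_sym x y : b x y = b y x. Proof. by rewrite /b lcaC. Qed.
Lemma a_ultra x y w : a x w <= Num.max (a x y) (a y w).
Proof. exact: (lca_ultra HpT HtT). Qed.
Lemma b_ultra x y w : b x w <= Num.max (b x y) (b y w).
Proof. exact: (lca_ultra HpS HtS). Qed.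
Lemma a_diag x : a x x = tauT (lf x). Proof. by rewrite /a lca_id. Qed.
Lemma b_diag x : b x x = tauT (lf x). Proof. by rewrite /b lca_id // tau_leaf. Qed.
Lemma a_gt x y : x != y -> a x x < a x y.
Proof.
move=> h; rewrite a_diag /a; apply: (leaf_lca_lt HpT HtT) => //.
by apply/negP => /eqP /lf_inj e; rewrite e eqxx in h.
Qed.
Lemma a_top x y : a x y < tauS zS.
Proof. rewrite -tau_top; apply: (tau_lca_ltz HpT HtT); exact: leaf_ne (lf_leaf _). Qed.
Lemma b_top x y : b x y < tauS zS.
Proof. apply: (tau_lca_ltz HpS HtS); exact: leaf_ne (mS_leaf _). Qed.
Lemma isV_a x y : isV (a x y). Proof. by left; eexists. Qed.
Lemma isV_b x y : isV (b x y). Proof. by right; eexists. Qed.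
Lemma isV_S s : isV (tauS s). Proof. by right; eexists. Qed.

Lemma cc_cases x y : cc x y = a x y \/ cc x y = b x y - eps.
Proof.
by rewrite /cc; case: (lerP (a x y) (b x y - eps)) => h; [right|left].
Qed.
Lemma cc_ge_a x y : a x y <= cc x y. Proof. by rewrite le_max lexx. Qed.
Lemma cc_ge_b x y : b x y - eps <= cc x y. Proof. by rewrite le_max lexx orbT. Qed.

Lemma cc_sym x y : cc x y = cc y x. Proof. by rewrite /cc a_sym b_sym. Qed.
Lemma cc_ultra x y w : cc x w <= Num.max (cc x y) (cc y w).
Proof.
have h1 := a_ultra x y w; have h2 := b_ultra x y w.
rewrite /cc !ge_max; apply/andP; split.
  apply: le_trans h1 _; rewrite ge_max !le_max !lexx /=; by rewrite !orbT.
have : b x w - eps <= Num.max (b x y - eps) (b y w - eps).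
  move: h2; rewrite !le_max; case/orP => h; by rewrite !lerD2r h ?orbT.
move=> h; apply: le_trans h _; rewrite ge_max !le_max !lexx /=; by rewrite !orbT.
Qed.
Lemma cc_diag x : cc x x = tauT (lf x).
Proof. rewrite /cc a_diag b_diag; apply/max_idPl; have := eps_pos; lra. Qed.
Lemma cc_diag_lt x y : x != y -> cc x x < cc x y.
Proof. move=> h; rewrite cc_diag -a_diag; apply: lt_le_trans (a_gt h) (cc_ge_a x y). Qed.

Lemma Hcc : ultra_hyp cc.
Proof. split; [exact: cc_sym | exact: cc_ultra | exact: cc_diag_lt]. Qed.

Lemma gapE u v e1 e2 : isV u -> isV v -> (e1 = 0 \/ e1 = eps) -> (e2 = 0 \/ e2 = eps) ->
  u - e1 < v - e2 -> u - e1 + delta / 2 <= v - e2.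
Proof.
move=> hu hv he1 he2 h.
have hh : forall p q, isV p -> isV q -> p < q -> p + delta <= q by [].
case: (ltrgtP u v) => huv.
- have := Hgap hu hv huv; rewrite /eps in he1 he2; case: he1 => ->; case: he2 => ->; lra.
- have := Hgap hv hu huv; rewrite /eps in he1 he2 h *; case: he1 h => ->; case: he2 => -> ; lra.
- rewrite /eps in he1 he2 h *; subst v; case: he1 h => ->; case: he2 => ->; lra.
Qed.

Lemma cc_gap x y x' y' : cc x y < cc x' y' -> cc x y + delta / 2 <= cc x' y'.
Proof.
case: (cc_cases x y) => ->; case: (cc_cases x' y') => ->.
- move=> h; have := gapE (isV_a x y) (isV_a x' y') (or_introl erefl) (or_introl erefl).
  rewrite !subr0 => /(_ h) //.
- move=> h; have := gapE (isV_a x y) (isV_b x' y') (or_introl erefl) (or_intror erefl).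
  rewrite !subr0 => /(_ h) //.
- move=> h; have := gapE (isV_b x y) (isV_a x' y') (or_intror erefl) (or_introl erefl).
  rewrite !subr0 => /(_ h) //.
- move=> h; exact: gapE (isV_b x y) (isV_b x' y') (or_intror erefl) (or_intror erefl) h.
Qed.


Notation cl := (cluster cc).
Notation dd := (d cc).

Lemma dd_val A : cl A -> exists x y, dd A = cc x y.
Proof. by move=> h; case: (d_att Hcc h) => x [y [_ _ <-]]; exists x, y. Qed.

Lemma dd_top A : cl A -> dd A + eta < tauS zS.
Proof.
move=> h; case: (dd_val h) => x [y ->]; have := eta_eps; have := eps_delta; have := eta_pos.
case: (cc_cases x y) => ->.
  have := Hgap (isV_a x y) (isV_S zS) (a_top x y); lra.
have := Hgap (isV_b x y) (isV_S zS) (b_top x y); lra.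
Qed.

Lemma dd_gap A B : cl A -> cl B -> dd A < dd B -> dd A + delta / 2 <= dd B.
Proof.
move=> hA hB; case: (dd_val hA) => x [y ->]; case: (dd_val hB) => x' [y' ->].
exact: cc_gap.
Qed.

Definition shift (A : {set L}) : bool :=
  [exists s, tauS s == dd A] && [forall x in A, forall y in A, b x y < dd A].
Definition fsh (A : {set L}) : R := if shift A then eta else 0.

Lemma fsh_bound A : 0 <= fsh A <= eta.
Proof. by rewrite /fsh; case: (shift A); have := eta_pos; lra. Qed.

Lemma hf1 A B : cl A -> cl B -> A \proper B -> dd A + fsh A < dd B + fsh B.
Proof.
move=> hA hB hp; have h := d_strict Hcc hA hB hp.
have := dd_gap hA hB h; have := fsh_bound A; have := fsh_bound B.
have := Hdelta; rewrite /eta; lra.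
Qed.

Lemma hf2 A : cl A -> dd A + fsh A < tauS zS.
Proof. move=> hA; have := dd_top hA; have := fsh_bound A; lra. Qed.

Definition VT2 := VTc cc.
Definition parT2 : VT2 -> VT2 := @parC _ _ cc.
Definition tau2 : VT2 -> R := @tauC _ _ cc (tauS zS) fsh.
Definition lf2 (x : L) : VT2 := @node _ _ cc [set x].

Lemma planted2 : planted_phylo None parT2.
Proof. exact: plantedC Hcc l0. Qed.

Lemma time_map2 : time_map parT2 tau2.
Proof. exact: time_mapC hf1 hf2. Qed.

Lemma shift_notS A s : shift A -> tauS s != dd A + eta.
Proof.
case/andP => /existsP [s0 /eqP h0] _; apply/negP => /eqP h.
have hlt : tauS s0 < tauS s by rewrite h h0; have := eta_pos; lra.
have := Hgap (isV_S s0) (isV_S s) hlt; rewrite h h0 /eta; have := Hdelta; lra.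
Qed.

Lemma b_le_dd A s x y : cl A -> tauS s = dd A -> x \in A -> y \in A -> b x y <= dd A.
Proof.
move=> hA hs hx hy; have h1 := d_ge Hcc hA hx hy; have h2 := cc_ge_b x y.
rewrite leNgt; apply/negP => hlt.
have := Hgap (isV_S s) (isV_b x y); rewrite hs => /(_ hlt).
have := eps_delta; lra.
Qed.

Lemma dd_window C s : cl C -> tauS s - eps <= dd C -> dd C < tauS s -> dd C = tauS s - eps.
Proof.
move=> hC h1 h2; case: (dd_val hC) => x [y e]; rewrite e in h1 h2 *.
have := eps_pos; have := eps_delta.
case: (cc_cases x y) => e'; rewrite e' in h1 h2 *.
  have := Hgap (isV_a x y) (isV_S s) h2; lra.
case: (ltrgtP (b x y) (tauS s)) => hb.
- have := Hgap (isV_b x y) (isV_S s) hb; lra.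
- have := Hgap (isV_S s) (isV_b x y) hb; lra.
- by rewrite hb.
Qed.


Definition kidp (C A : {set L}) : bool := cl C && (pars cc C == Some A).
Definition tieh (A : {set L}) : bool :=
  [&& (1 < #|A|)%N, [exists s, tauS s == dd A] & [exists x in A, exists y in A, dd A <= b x y]].
Definition multi (C A : {set L}) : bool := [exists x in C, exists y in C, b x y == dd A].
Definition Rk (A : {set L}) : {set L} :=
  odflt A (if [pick C | [&& kidp C A, tieh A & ~~ multi C A]] is Some C then Some C
           else [pick C | kidp C A]).
Definition refset (A : {set L}) := if multi (Rk A) A then Rk (Rk A) else Rk A.
Definition ch (C : {set L}) : {set L} :=
  if pars cc C is Some A then
    (if [&& tieh A, multi C A & C != Rk A] then
       odflt (Rk C) [pick D | kidp D C && [exists x in D, exists y in refset A, b x y == dd A]]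
     else Rk C)
  else Rk C.
Definition des (C : {set L}) := iter #|L| ch C.
Definition dl (C : {set L}) : L := odflt l0 [pick x in des C].

Lemma kidp_spec C A : kidp C A -> [/\ cl C, cl A & C \proper A].
Proof. by case/andP => hC /eqP /pars_spec [hA hp _]. Qed.

Lemma kid_exists A : cl A -> (1 < #|A|)%N -> exists C, kidp C A.
Proof.
move=> hA hc; case: (cluster_n0 Hcc hA) => x hx.
by case: (kid_ex Hcc l0 hA hx hc) => C [h1 h2 _]; exists C; rewrite /kidp h1 h2 eqxx.
Qed.

Lemma Rk_kid A : cl A -> (1 < #|A|)%N -> kidp (Rk A) A.
Proof.
move=> hA hc; rewrite /Rk; case: pickP => [C /and3P [h _ _]|_] //=.
case: pickP => [C h|hn] //=.
by case: (kid_exists hA hc) => C hC; rewrite hn in hC.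
Qed.

Lemma Rk_single A : tieh A -> (exists C, kidp C A && ~~ multi C A) -> ~~ multi (Rk A) A.
Proof.
move=> ht [C hC]; rewrite /Rk; case: pickP => [C' /and3P [_ _ h]|hn] //=.
by have := hn C; case/andP: hC => h1 h2; rewrite h1 ht h2.
Qed.

Lemma no_kid C A : cl A -> #|A| = 1%N -> ~~ kidp C A.
Proof.
move=> hA h1; apply/negP => /kidp_spec [hC _ /proper_card].
rewrite h1 ltnS leqn0 cards_eq0 => /eqP e.
by case: (cluster_n0 Hcc hC) => x; rewrite e inE.
Qed.

Lemma Rk_one A : cl A -> #|A| = 1%N -> Rk A = A.
Proof.
move=> hA h1; rewrite /Rk; case: pickP => [C /and3P [h _ _]|_].
  by rewrite (negbTE (no_kid C hA h1)) in h.
by case: pickP => [C h|_] //; rewrite (negbTE (no_kid C hA h1)) in h.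
Qed.

Lemma ch_kid C : cl C -> (1 < #|C|)%N -> kidp (ch C) C.
Proof.
move=> hC hc; rewrite /ch; case: (pars cc C) => [A|]; last exact: Rk_kid.
case: ifP => _; last exact: Rk_kid.
by case: pickP => [D /andP [h _]|_] //=; exact: Rk_kid.
Qed.

Lemma ch_one C : cl C -> #|C| = 1%N -> ch C = C.
Proof.
move=> hC h1; rewrite /ch; case: (pars cc C) => [A|]; last exact: Rk_one.
case: ifP => _; last exact: Rk_one.
case: pickP => [D /andP [h _]|_] /=; last exact: Rk_one.
by rewrite (negbTE (no_kid D hC h1)) in h.
Qed.

Lemma card_cl C : cl C -> (0 < #|C|)%N.
Proof. by move=> h; case: (cluster_n0 Hcc h) => x hx; rewrite card_gt0; apply/set0Pn; exists x. Qed.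

Lemma iter_ch n C : cl C ->
  [/\ cl (iter n ch C), iter n ch C \subset C & (#|iter n ch C| <= maxn 1 (#|C| - n))%N].
Proof.
move=> hC; elim: n => [|n [h1 h2 h3]] /=.
  by split; [exact: hC | exact: subxx | rewrite subn0; lia].
set D := iter n ch C in h1 h2 h3 *.
case: (ltnP 1 #|D|) => hc.
  case/kidp_spec: (ch_kid h1 hc) => hk _ hp; split => //.
    exact: subset_trans (proper_sub hp) h2.
  have := proper_card hp; move: h3; lia.
have e : #|D| = 1%N by apply/eqP; rewrite eqn_leq hc card_cl.
rewrite ch_one // e; split => //; lia.
Qed.

Lemma des_spec C : cl C -> [/\ cl (des C), des C \subset C & #|des C| = 1%N].
Proof.
move=> hC; case: (iter_ch #|L| hC) => h1 h2 h3; split => //.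
apply/eqP; rewrite eqn_leq card_cl // andbT; apply: leq_trans h3 _.
have := max_card C; lia.
Qed.

Lemma des_ch C : cl C -> des (ch C) = des C.
Proof.
move=> hC; rewrite /des -iterSr iterS; case: (des_spec hC) => h1 _ h3.
exact: ch_one.
Qed.

Lemma dl_spec C : cl C -> des C = [set dl C].
Proof.
move=> hC; case: (des_spec hC) => _ _ /eqP /cards1P [x hx].
by rewrite /dl hx; case: pickP => [y|/(_ x)]; rewrite !inE ?eqxx // => /eqP ->.
Qed.

Lemma dl_in C : cl C -> dl C \in C.
Proof.
move=> hC; case: (des_spec hC) => _ h _; apply: (subsetP h); by rewrite dl_spec // set11.
Qed.

Lemma cl_ch C : cl C -> cl (ch C).
Proof.
move=> hC; case: (ltnP 1 #|C|) => hc; first by case/kidp_spec: (ch_kid hC hc).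
by rewrite ch_one //; apply/eqP; rewrite eqn_leq hc card_cl.
Qed.

Lemma dl_ch C : cl C -> dl (ch C) = dl C.
Proof. by move=> hC; rewrite /dl des_ch. Qed.

Lemma dl_sub_aux n (C B : {set L}) : (#|C| <= n)%N -> cl C -> cl B -> B \subset C -> dl C \in B -> dl B = dl C.
Proof.
elim: n C => [|n IH] C hn hC hB hs hx.
  by move: (card_cl hC); rewrite ltnNge hn.
case: (eqVneq B C) => [->//|hne].
have hp : B \proper C by rewrite properEneq hne hs.
have hc : (1 < #|C|)%N.
  have := proper_card hp; have := card_cl hB; lia.
case/kidp_spec: (ch_kid hC hc) => hk _ hpk.
have hpar : pars cc (ch C) = Some C by case/andP: (ch_kid hC hc) => _ /eqP.
have hxk : dl C \in ch C by rewrite -dl_ch //; exact: dl_in.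
have hBk : B \subset ch C := in_kid Hcc hpar hk hB hx hxk hp.
rewrite -(dl_ch hC); apply: IH => //; last by rewrite dl_ch.
have := proper_card hpk; lia.
Qed.

Lemma dl_sub C B : cl C -> cl B -> B \subset C -> dl C \in B -> dl B = dl C.
Proof. exact: dl_sub_aux (leqnn _). Qed.

Lemma dl_one x : dl [set x] = x.
Proof.
have h1 := cluster1 Hcc x.
by have := dl_in h1; rewrite inE => /eqP.
Qed.


Definition mu2 (v : VT2) : VS + VS :=
  if v is Some A then lin zS parS tauS (tau2 v) (mS (sigma (dl (val A)))) else inl zS.

Lemma tau2E (A : VC cc) : tau2 (Some A) = dd (val A) + fsh (val A).
Proof. by []. Qed.

Lemma lf2E x : exists a : VC cc, lf2 x = Some a /\ val a = [set x].
Proof. exact: node_val (cluster1 Hcc x). Qed.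

Lemma shift_one x : shift [set x] = false.
Proof.
apply/negP => /andP [_ /forallP /(_ x) /implyP]; rewrite set11 => /(_ isT).
move/forallP/(_ x)/implyP; rewrite set11 => /(_ isT).
by rewrite (d1 Hcc) cc_diag b_diag ltxx.
Qed.

Lemma tau2_leaf x : tau2 (lf2 x) = tauS (mS (sigma x)).
Proof.
case: (lf2E x) => a1 [-> h]; rewrite tau2E h /fsh shift_one (d1 Hcc) addr0 cc_diag.
exact: tau_leaf.
Qed.

Lemma mu2_leaf x : mu2 (lf2 x) = inl (mS (sigma x)).
Proof.
have := tau2_leaf x; case: (lf2E x) => a1 [-> h] ht.
rewrite /mu2 h dl_one ht; apply: lin_vertex => //; exact: anc_refl.
Qed.

Lemma F1 (A : VC cc) : tauS (mS (sigma (dl (val A)))) <= tau2 (Some A) /\ tau2 (Some A) < tauS zS.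
Proof.
split; last by have := hf2 (valP A).
rewrite tau2E -tau_leaf -(cc_diag) -(d1 Hcc).
have := fsh_bound (val A); have : dd [set dl (val A)] <= dd (val A).
  apply: (d_mono Hcc (cluster1 Hcc _) (valP A)); rewrite sub1set; exact: dl_in (valP A).
lra.
Qed.

Lemma mu2_cases (A : VC cc) :
  let m := mS (sigma (dl (val A))) in
  (exists s, [/\ mu2 (Some A) = inl s, anc parS m s & tauS s = tau2 (Some A)]) \/
  (exists v, [/\ mu2 (Some A) = inr v, anc parS m v, v != zS, tauS v < tau2 (Some A)
                & tau2 (Some A) < tauS (parS v)]).
Proof. by case: (F1 A) => h1 h2; have := lin_cases HpS HtS h1 h2. Qed.

Lemma relaxed2 : relaxed_scenario sigma None parT2 zS parS tau2 tauS lf2 mS mu2.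
Proof.
refine (conj (And4 _ _ _ _) (conj (And3 _ _ _) (And4 _ _ _ _))).
- exact: planted2.
- exact: HpS.
- exact: time_map2.
- exact: HtS.
- split.
  move=> x y; case: (lf2E x) => a1 [-> h1]; case: (lf2E y) => a2 [-> h2] [e].
  by apply/set1P; rewrite -h2 -e h1 set11.
  move=> v; split.
    case: v => [A|]; last by move/leaf_ne; rewrite eqxx.
    rewrite /parT2 (leafC Hcc l0) => /cards1P [x hx]; exists x.
    case: (lf2E x) => a1 [-> h1]; congr Some; apply: val_inj; by rewrite hx h1.
  case=> l ->; case: (lf2E l) => a1 [e h1]; rewrite e /parT2 (leafC Hcc l0) h1 cards1 //.
- split; last exact: mS_leaf.
  by case: Hrel => _ [[_ [h _] _] _].
- case=> [A|] //; case: (mu2_cases A) => [[s [-> _ _]]|[v [-> _ h _ _]]] //.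
- case=> [A|]; last by [].
  split=> // h; exfalso; case: (mu2_cases A) => [[s [e _ ht]]|[v [e _ _ _ _]]]; rewrite e in h => //.
  case: h => hs; rewrite hs in ht; case: (F1 A) => _; by rewrite -ht ltxx.
- split; last exact: mu2_leaf.
  move=> v; split; last first.
    rewrite /parT2; case: v => [A|]; last by move/leaf_ne; rewrite eqxx.
    rewrite (leafC Hcc l0) => /cards1P [x hx].
    have e : Some A = lf2 x by case: (lf2E x) => a1 [-> h1]; congr Some; apply: val_inj; rewrite hx h1.
    rewrite e mu2_leaf; exists (mS (sigma x)) => //; exact: mS_leaf.
  case=> s; case: v => [A|]; last by move=> [<-] /leaf_ne; rewrite eqxx.
  move=> hmu hleaf; rewrite /parT2 (leafC Hcc l0).
  case: (mu2_cases A) => [[s' [e hanc ht]]|[v [e _ _ _ _]]]; rewrite e in hmu; last by [].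
  case: hmu => hs; subst s'.
  have hm := leaf_min HpS hleaf hanc.
  apply/negPn/negP => hc.
  set x := dl (val A) in hm.
  have hx : x \in val A := dl_in (valP A).
  have hc1 : (1 < #|val A|)%N by rewrite ltn_neqAle eq_sym hc card_cl // (valP A).
  case/card_gt1P: hc1 => p [q [hp hq hpq]].
  have [y [hy hyx]] : exists y, y \in val A /\ x != y.
    by case: (eqVneq p x) => [epx|hpx]; [exists q; rewrite -epx | exists p; rewrite eq_sym].
  have h1 := cc_diag_lt hyx.
  have h2 := d_ge Hcc (valP A) hx hy.
  have := fsh_bound (val A); move: ht; rewrite tau2E -hm -tau_leaf -cc_diag; lra.
- case=> [A|] s; last by case=> <-.
  by case: (mu2_cases A) => [[s' [-> _ ht]] [<-]|[v [-> _ _ _ _]]].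
- case=> [A|] v //.
  by case: (mu2_cases A) => [[s' [-> _ ht]]|[v' [-> _ _ h1 h2]] [<-]] //; rewrite h1 h2.
Qed.


Lemma lca2_leaf x y : exists w : VC cc,
  lca None parT2 (lf2 x) (lf2 y) = Some w /\ val w = ball cc x (cc x y).
Proof.
rewrite /lf2 /parT2 (lcaC_leaf Hcc l0); apply: node_val.
by apply/clusterP; exists x, y.
Qed.

Lemma explains2 G1 G2 G3 :
  explains sigma zT parT zS parS tauT tauS lf mS G1 G2 G3 ->
  explains sigma None parT2 zS parS tau2 tauS lf2 mS G1 G2 G3.
Proof.
move=> hE x y hxy; have := hE x y hxy; cbv zeta; case=> -> -> ->; cbv zeta.
case: (lca2_leaf x y) => w [-> hw].
rewrite tau2E hw (dE Hcc (erefl _)) -/(a x y) -/(b x y).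
case/andP: (fsh_bound (ball cc x (cc x y))) => hf1 hf2.
set F := fsh (ball cc x (cc x y)) in hf1 hf2 *.
have he := eta_eps; have hd := eps_delta; have hep := eps_pos.
case: (ltrgtP (a x y) (b x y)) => hab.
- have hT : cc x y + F < b x y.
    case: (cc_cases x y) => ->; last lra.
    have := Hgap (isV_a x y) (isV_b x y) hab; lra.
  rewrite hT; split => //.
    by apply/esym/negP => /eqP e; move: hT; rewrite e ltxx.
  by apply/esym/negP => h; move: hT; rewrite ltNge ltW.
- have hT : b x y < cc x y + F.
    have := cc_ge_a x y; lra.
  rewrite hT; split => //.
    by apply/esym/negP => h; move: hT; rewrite ltNge ltW.
  by apply/esym/negP => /eqP e; move: hT; rewrite e ltxx.
- have hc : cc x y = b x y.
    rewrite /cc hab; apply/max_idPl; lra.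
  have hs : F = 0.
    rewrite /F /fsh; case: ifP => // /andP [_ /forallP /(_ x) /implyP].
    rewrite (ball_c1 Hcc) => /(_ isT) /forallP /(_ y) /implyP.
    by rewrite (ball_c2 cc) => /(_ isT); rewrite (dE Hcc (erefl _)) hc ltxx.
  by rewrite hs addr0 hc ltxx eqxx.
Qed.


Lemma nonhgt (B : VC cc) :
  (forall P : VC cc, parT2 (Some B) = Some P -> dl (val P) = dl (val B)) ->
  ~~ hgt parT2 parS mu2 (Some B).
Proof.
move=> hP; rewrite /hgt negbK /comparable_el.
case: (parC_cases Hcc l0 B) => [[hT e]|[P [e hp hs]]]; rewrite /parT2 e.
  apply/orP; right; case: (F1 B) => h1 h2; by have := lin_le_z HpS HtS h1 h2.
apply/orP; right.
have hPd := hP P e.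
case: (F1 B) => h1 h2; case: (F1 P) => h3 h4.
rewrite /mu2 hPd; apply: (lin_mono HpS HtS h1) => //.
apply: ltW; apply: time_map2.
  by rewrite -e; apply: anc_par.
by apply/negP => /eqP [eb]; move: hs; rewrite eb properxx.
Qed.

Lemma lf2_leaf x : lf2 x \in leaves None parT2.
Proof. by case: (lf2E x) => a1 [-> h]; rewrite /parT2 (leafC Hcc l0) h cards1. Qed.

Lemma anc_lf2 x (B : VC cc) : anc parT2 (lf2 x) (Some B) -> x \in val B.
Proof. by case: (lf2E x) => a1 [-> h] /anc_sub; rewrite h sub1set. Qed.

Lemma wit_Some (A : VC cc) : witness None parT2 parS mu2 (lf2 (dl (val A))) (Some A).
Proof.
have hx := dl_in (valP A).
split; first exact: lf2_leaf.
  case: (lf2E (dl (val A))) => a1 [-> h]; apply: (sub_anc Hcc l0); by rewrite h sub1set.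
move=> w h1 h2 h3 h4.
case: w h1 h2 h3 h4 => [B|] h1 h2 h3 h4; last by rewrite eqxx in h4.
have hxB := anc_lf2 h1.
have hBA := anc_sub h2.
have hdB : dl (val B) = dl (val A) := dl_sub (valP A) (valP B) hBA hxB.
apply: nonhgt => P hP.
case: (parC_cases Hcc l0 B) => [[hT e]|[P' [e hp hs]]]; rewrite /parT2 e in hP => //.
case: hP => eP; subst P'.
have hBA' : val B \proper val A.
  rewrite properEneq hBA andbT; apply/negP => /eqP eb.
  by move/negP: h3; apply; apply/eqP; congr Some; apply: val_inj.
case/pars_spec: hp => _ _ hmin.
have hPA := hmin _ (valP A) hBA'.
rewrite hdB; apply: (dl_sub (valP A) (valP P) hPA).
by rewrite -hdB; apply: (subsetP (proper_sub hs)); exact: dl_in (valP B).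
Qed.

Lemma wit_None : witness None parT2 parS mu2 (lf2 (dl setT)) None.
Proof.
have hT := clusterT cc l0.
split; first exact: lf2_leaf.
  exact: (anc_None Hcc l0).
move=> w h1 _ _ h4.
case: w h1 h4 => [B|] h1 h4; last by rewrite eqxx in h4.
have hxB := anc_lf2 h1.
have hdB : dl (val B) = dl setT := dl_sub hT (valP B) (subsetT _) hxB.
apply: nonhgt => P hP.
case: (parC_cases Hcc l0 B) => [[hT' e]|[P' [e hp hs]]]; rewrite /parT2 e in hP => //.
case: hP => eP; subst P'.
rewrite hdB; apply: (dl_sub hT (valP P) (subsetT _)).
by rewrite -hdB; apply: (subsetP (proper_sub hs)); exact: dl_in (valP B).
Qed.

Lemma wit_kid (A C : VC cc) : pars cc (val C) = Some (val A) ->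
  comparable_el parS (mu2 (Some A)) (mu2 (Some C)) ->
  witness None parT2 parS mu2 (lf2 (dl (val C))) (Some A).
Proof.
move=> hpC hcmp.
have hx := dl_in (valP C).
have hCA : val C \proper val A by case/pars_spec: hpC.
split; first exact: lf2_leaf.
  case: (lf2E (dl (val C))) => a1 [-> h]; apply: (sub_anc Hcc l0); rewrite h sub1set.
  exact: (subsetP (proper_sub hCA)).
move=> w h1 h2 h3 h4.
case: w h1 h2 h3 h4 => [B|] h1 h2 h3 h4; last by rewrite eqxx in h4.
have hxB := anc_lf2 h1.
have hBA := anc_sub h2.
have hBA' : val B \proper val A.
  rewrite properEneq hBA andbT; apply/negP => /eqP eb.
  by move/negP: h3; apply; apply/eqP; congr Some; apply: val_inj.
have hBC : val B \subset val C := in_kid Hcc hpC (valP C) (valP B) hxB hx hBA'.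
case: (eqVneq (val B) (val C)) => [eBC|hne].
  have -> : B = C by apply: val_inj.
  rewrite /hgt negbK.
  case: (parC_cases Hcc l0 C) => [[hT e]|[P' [e hp hs]]]; rewrite /parT2 e.
    by move: hCA; rewrite hT properE subsetT andbF.
  have -> : P' = A by apply: val_inj; move: hp; rewrite hpC => [[]].
  exact: hcmp.
have hBC' : val B \proper val C by rewrite properEneq hne hBC.
have hdB : dl (val B) = dl (val C) := dl_sub (valP C) (valP B) hBC hxB.
apply: nonhgt => P hP.
case: (parC_cases Hcc l0 B) => [[hT e]|[P' [e hp hs]]]; rewrite /parT2 e in hP => //.
case: hP => eP; subst P'.
case/pars_spec: hp => _ _ hmin.
have hPC := hmin _ (valP C) hBC'.
rewrite hdB; apply: (dl_sub (valP C) (valP P) hPC).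
by rewrite -hdB; apply: (subsetP (proper_sub hs)); exact: dl_in (valP B).
Qed.


Lemma vertex_case u s : mu2 u = inl s -> inner zS parS s ->
  exists A : VC cc, [/\ u = Some A, tieh (val A), tauS s = dd (val A), tau2 u = dd (val A) &
    forall z, z \in val A -> anc parS (mS (sigma z)) s].
Proof.
case: u => [A|] h hin; last by case: h => e; rewrite -e /inner eqxx in hin.
case: (mu2_cases A) => [[s' [e hanc ht]]|[v [e _ _ _ _]]]; rewrite e in h; last by [].
case: h => es; subst s'.
set x := dl (val A) in hanc.
have hx : x \in val A := dl_in (valP A).
have hc : (1 < #|val A|)%N.
  rewrite ltn_neqAle eq_sym card_cl ?(valP A) // andbT; apply/negP => /cards1P [y hy].
  have ey : y = x by move: hx; rewrite hy inE => /eqP.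
  have eA : Some A = lf2 x.
    by case: (lf2E x) => a1 [-> h1]; congr Some; apply: val_inj; rewrite hy h1 ey.
  move: e; rewrite eA mu2_leaf => [[es]].
  by move: hin; rewrite /inner -es mS_leaf andbF.
have hsh : shift (val A) = false.
  apply/negP => hs; have := shift_notS s hs; rewrite ht tau2E /fsh hs eqxx.
  by [].
have hd : tau2 (Some A) = dd (val A) by rewrite tau2E /fsh hsh addr0.
rewrite hd in ht.
have hbl : forall p q, p \in val A -> q \in val A -> b p q <= dd (val A).
  by move=> p q hp hq; apply: (b_le_dd (valP A) ht).
exists A; split => //.
  rewrite /tieh hc /=; apply/andP; split; first by apply/existsP; exists s; rewrite ht.
  move: hsh; rewrite /shift; have -> : [exists s0, tauS s0 == dd (val A)].
    by apply/existsP; exists s; rewrite ht.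
  move/negbT; case/forall_inPn => p hp /forall_inPn [q hq hpq].
  by apply/exists_inP; exists p => //; apply/exists_inP; exists q => //; rewrite leNgt.
move=> w hw.
have h1 := lca_anc1 HpS (mS (sigma x)) (mS (sigma w)).
have h2 := lca_anc2 HpS (mS (sigma x)) (mS (sigma w)).
apply: anc_trans h2 _; apply: (anc_of_tau HtS h1 hanc).
rewrite ht; exact: hbl.
Qed.

Lemma S5_2 u s : mu2 u = inl s -> inner zS parS s ->
  forall v, v \in children parT2 u -> lt_el parS (mu2 v) (mu2 u).
Proof.
move=> hmu hin; case: (vertex_case hmu hin) => A [eu ht hts htau hcol] v hv.
subst u; rewrite hmu.
case: v hv => [C|] hv; last by rewrite (negbTE (None_notin_children _)) in hv.
move: hv; rewrite /parT2 (childrenC Hcc l0) => /eqP hp.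
case: (F1 C) => h1 h2.
have hCA : val C \subset val A by case/pars_spec: hp => _ /proper_sub.
apply: (lin_lt_anc HpS HtS h1 h2).
  apply: hcol; apply: (subsetP hCA); exact: dl_in (valP C).
rewrite hts -htau; apply: time_map2.
  have : parT2 (Some C) = Some A.
    case: (parC_cases Hcc l0 C) => [[hT e]|[P [e hp' _]]].
      by move: hp; rewrite hT parsT.
    rewrite /parT2 e; congr Some; apply: val_inj; move: hp'; rewrite hp => [[]] //.
  by move=> <-; apply: anc_par.
by apply/negP => /eqP [e]; case/pars_spec: hp => _; rewrite e properxx.
Qed.


Lemma diag_lt_dd (A : {set L}) x : cl A -> (1 < #|A|)%N -> x \in A -> cc x x < dd A.
Proof.
move=> hA hc hx; case/card_gt1P: hc => p [q [hp hq hpq]].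
have [y [hy hyx]] : exists y, y \in A /\ x != y.
  by case: (eqVneq p x) => [epx|hpx]; [exists q; rewrite -epx | exists p; rewrite eq_sym].
have := d_ge Hcc hA hx hy; have := cc_diag_lt hyx; lra.
Qed.

Lemma bdiag_lt (A : {set L}) x : cl A -> (1 < #|A|)%N -> x \in A -> b x x < dd A.
Proof. by move=> hA hc hx; rewrite b_diag -cc_diag; apply: diag_lt_dd. Qed.

Lemma multi_card (A C : {set L}) s : cl A -> tauS s = dd A -> (1 < #|A|)%N -> C \subset A -> multi C A ->
  (1 < #|C|)%N.
Proof.
move=> hA hs hc hCA /exists_inP [x hx /exists_inP [y hy /eqP hxy]].
apply/card_gt1P; exists x, y; split => //; apply/negP => /eqP e; subst y.
by have := bdiag_lt hA hc (subsetP hCA x hx); rewrite hxy ltxx.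
Qed.

Lemma struct_multi (A : {set L}) s (C D : {set L}) : cl A -> tauS s = dd A -> kidp C A -> multi C A -> kidp D C ->
  ~~ multi D A.
Proof.
move=> hA hs hCA hm hDC.
case/kidp_spec: hCA => hC _ hpCA; case/kidp_spec: hDC => hD _ hpDC.
have low : forall E : {set L}, cl E -> E \proper A -> multi E A -> tauS s - eps <= dd E /\ dd E < tauS s.
  move=> E hE hEA /exists_inP [x hx /exists_inP [y hy /eqP hxy]]; split.
    rewrite hs -hxy; have := cc_ge_b x y; have := d_ge Hcc hE hx hy; lra.
  by rewrite hs; have := d_strict Hcc hE hA hEA; lra.
case: (low C hC hpCA hm) => h1 h2.
have eC := dd_window hC h1 h2.
apply/negP => hmD.
have hpDA : D \proper A := proper_trans hpDC hpCA.
case: (low D hD hpDA hmD) => h3 _.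
have := d_strict Hcc hD hC hpDC; rewrite eC; lra.
Qed.

Lemma single_lt (A : {set L}) s (C : {set L}) x y : cl A -> tauS s = dd A -> C \subset A -> ~~ multi C A ->
  x \in C -> y \in C -> b x y < dd A.
Proof.
move=> hA hs hCA hm hx hy; rewrite lt_neqAle (b_le_dd hA hs (subsetP hCA x hx) (subsetP hCA y hy)).
rewrite andbT; apply/negP => /eqP e; move/negP: hm; apply.
by apply/exists_inP; exists x => //; apply/exists_inP; exists y => //; rewrite e.
Qed.

Lemma b_lt_trans t x y z : b x y < t -> b y z < t -> b x z < t.
Proof. by move=> h1 h2; apply: le_lt_trans (b_ultra x y z) _; rewrite gt_max h1 h2. Qed.

Lemma refset_spec (A : {set L}) s : cl A -> tauS s = dd A -> tieh A ->
  [/\ dl (Rk A) \in refset A, refset A \subset A &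
      forall x y, x \in refset A -> y \in refset A -> b x y < dd A].
Proof.
move=> hA hs ht.
have hc : (1 < #|A|)%N by case/and3P: ht.
have hk := Rk_kid hA hc; case/kidp_spec: (hk) => hR _ hRA.
rewrite /refset; case: ifP => hm.
  have hcR := multi_card hA hs hc (proper_sub hRA) hm.
  have hkk := Rk_kid hR hcR; case/kidp_spec: (hkk) => hRR _ hRRR.
  have hsub : Rk (Rk A) \subset A := subset_trans (proper_sub hRRR) (proper_sub hRA).
  split => //.
    have -> : Rk (Rk A) = ch (Rk A).
      rewrite /ch; case/andP: hk => _ /eqP ->; by rewrite eqxx /= !andbF.
    by rewrite -(dl_ch hR); apply: dl_in; exact: cl_ch.
  move=> x y hx hy; apply: (single_lt hA hs hsub _ hx hy).
  exact: struct_multi hA hs hk hm hkk.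
split => //; first exact: dl_in.
  exact: proper_sub.
move=> x y hx hy; apply: (single_lt hA hs (proper_sub hRA) _ hx hy); by rewrite hm.
Qed.

Lemma split_pair t p q x : b p q = t -> b p x <= t -> b q x <= t ->
  b x p = t \/ b x q = t.
Proof.
move=> hpq hp hq.
case: (eqVneq (b p x) t) => [e|hne]; first by left; rewrite b_sym.
right; apply/eqP; rewrite eq_le b_sym hq /= leNgt; apply/negP => hlt.
have hp' : b p x < t by rewrite lt_neqAle hne hp.
by rewrite b_sym in hlt; have := b_lt_trans hp' hlt; rewrite hpq ltxx.
Qed.

Lemma find_X (A : {set L}) s : cl A -> tauS s = dd A -> tieh A ->
  exists X, [/\ kidp X A, X != Rk A & b (dl (Rk A)) (dl X) = dd A].
Proof.
move=> hA hs ht.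
have hc : (1 < #|A|)%N by case/and3P: ht.
have hk := Rk_kid hA hc; case/kidp_spec: (hk) => hR _ hRA.
case: (refset_spec hA hs ht) => hx1 hrefA hrefl.
set x1 := dl (Rk A) in hx1 *.
have hx1A : x1 \in A := subsetP hrefA x1 hx1.
have hbA : forall p q, p \in A -> q \in A -> b p q <= dd A.
  by move=> p q hp hq; apply: b_le_dd hA hs hp hq.
have case1 : forall C, [&& kidp C A, multi C A & C != Rk A] ->
    exists X, [/\ kidp X A, X != Rk A & b x1 (dl X) = dd A].
  move=> C /and3P [hCA hm hne]; exists C; split => //.
  case/kidp_spec: (hCA) => hC _ hpCA.
  have hcC := multi_card hA hs hc (proper_sub hpCA) hm.
  case/exists_inP: (hm) => p hp /exists_inP [q hq /eqP hpq].
  have hpA := subsetP (proper_sub hpCA) p hp; have hqA := subsetP (proper_sub hpCA) q hq.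
  have [r [hr hrx]] : exists r, r \in C /\ b r x1 = dd A.
    case: (split_pair hpq (hbA _ _ hpA hx1A) (hbA _ _ hqA hx1A)) => e.
      by exists p; rewrite b_sym.
    by exists q; rewrite b_sym.
  case: (kid_ex Hcc l0 hC hr hcC) => D [hD hpD hrD].
  have hpick : kidp D C && [exists x in D, exists y in refset A, b x y == dd A].
    rewrite /kidp hD hpD eqxx /=; apply/exists_inP; exists r => //.
    by apply/exists_inP; exists x1 => //; rewrite hrx.
  have hpar : pars cc C = Some A by case/andP: hCA => _ /eqP.
  have hch : exists D', [/\ ch C = D', kidp D' C & [exists x in D', exists y in refset A, b x y == dd A]].
    rewrite /ch hpar ht hm hne /=; case: pickP => [D' /andP [h1 h2]|hn].
      by exists D'.
    by rewrite hn in hpick.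
  case: hch => D' [eD' hD'C /exists_inP [u hu /exists_inP [v hv /eqP huv]]].
  have hdl : dl C = dl D' by rewrite -eD' dl_ch.
  case/kidp_spec: (hD'C) => hD' _ hpD'C.
  have hD'A : D' \subset A := subset_trans (proper_sub hpD'C) (proper_sub hpCA).
  have hsing := struct_multi hA hs hCA hm hD'C.
  have hdlD' : dl D' \in D' := dl_in hD'.
  apply/eqP; rewrite eq_le (hbA _ _ hx1A (subsetP hD'A _ _)); last by rewrite hdl.
  rewrite /= leNgt; apply/negP => hlt.
  have h1 : b u (dl D') < dd A := single_lt hA hs hD'A hsing hu hdlD'.
  have h2 : b (dl D') x1 < dd A by rewrite b_sym -hdl.
  have h3 : b x1 v < dd A := hrefl _ _ hx1 hv.
  by have := b_lt_trans (b_lt_trans h1 h2) h3; rewrite huv ltxx.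
case: (boolP [exists C, [&& kidp C A, multi C A & C != Rk A]]) => [/existsP [C hC]|hno].
  by case: (case1 C hC) => X hX; exists X.
have hno' : forall C, kidp C A -> C != Rk A -> ~~ multi C A.
  move=> C h1 h2; apply/negP => h3; move/negP: hno; apply; apply/existsP; exists C.
  by rewrite h1 h3 h2.
case: (boolP (multi (Rk A) A)) => hmR.
  exfalso.
  case/properP: hRA => _ [w hwA hwR].
  case: (kid_ex Hcc l0 hA hwA hc) => X [hX hpX hwX].
  have hkX : kidp X A by rewrite /kidp hX hpX eqxx.
  have hXR : X != Rk A by apply/negP => /eqP e; move/negP: hwR; apply; rewrite -e.
  have hsX := hno' X hkX hXR.
  have : ~~ multi (Rk A) A.
    apply: Rk_single => //; by exists X; rewrite hkX hsX.
  by rewrite hmR.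
case/and3P: ht => _ _ /exists_inP [p hp /exists_inP [q hq hpq]].
have epq : b p q = dd A by apply/eqP; rewrite eq_le hpq hbA.
have [r [hr hrx]] : exists r, r \in A /\ b x1 r = dd A.
  case: (split_pair epq (hbA _ _ hp hx1A) (hbA _ _ hq hx1A)) => e.
    by exists p.
  by exists q.
case: (kid_ex Hcc l0 hA hr hc) => X [hX hpX hrX].
have hkX : kidp X A by rewrite /kidp hX hpX eqxx.
have hXR : X != Rk A.
  apply/negP => /eqP e; rewrite e in hrX.
  have := single_lt hA hs (proper_sub hRA) hmR (dl_in hR) hrX.
  by rewrite -/x1 hrx ltxx.
exists X; split => //.
have hsX := hno' X hkX hXR.
have hXA : X \subset A by case/kidp_spec: hkX => _ _ /proper_sub.
have hdX := dl_in hX.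
apply/eqP; rewrite eq_le hbA //=; last exact: subsetP hXA _ hdX.
rewrite leNgt; apply/negP => hlt.
have h2 : b (dl X) r < dd A := single_lt hA hs hXA hsX hdX hrX.
by have := b_lt_trans hlt h2; rewrite hrx ltxx.
Qed.


Lemma lca_kids (A C1 C2 : {set L}) x y : kidp C1 A -> kidp C2 A -> C1 != C2 ->
  x \in C1 -> y \in C2 -> ball cc x (cc x y) = A.
Proof.
move=> h1 h2 hne hx hy.
case/kidp_spec: (h1) => hC1 hA hp1; case/kidp_spec: (h2) => hC2 _ hp2.
have hxA := subsetP (proper_sub hp1) x hx; have hyA := subsetP (proper_sub hp2) y hy.
have hB : cl (ball cc x (cc x y)) by apply/clusterP; exists x, y.
have hBA : ball cc x (cc x y) \subset A.
  rewrite (cluster_ballE Hcc hA hxA); apply: ball_sub; have := d_ge Hcc hA hxA hyA; lra.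
apply/eqP; rewrite eqEsubset hBA /=.
case: (boolP (A \subset ball cc x (cc x y))) => // hAB; exfalso.
have hpB : ball cc x (cc x y) \proper A by rewrite properE hBA hAB.
have hpar1 : pars cc C1 = Some A by case/andP: h1 => _ /eqP.
have hpar2 : pars cc C2 = Some A by case/andP: h2 => _ /eqP.
have hsub := in_kid Hcc hpar1 hC1 hB (ball_c1 Hcc x y) hx hpB.
have hyC1 := subsetP hsub y (ball_c2 cc x y).
by move/negP: hne; apply; apply/eqP; apply: (kid_eq Hcc hpar1 hpar2 hC1 hC2 hyC1 hy).
Qed.

Lemma kid_wit (a : VC cc) s (C : {set L}) : mu2 (Some a) = inl s -> inner zS parS s ->
  kidp C (val a) -> witness None parT2 parS mu2 (lf2 (dl C)) (Some a).
Proof.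
move=> hmu hin hk; case/kidp_spec: (hk) => hC _ _.
have [r [hr hrv]] := node_val hC.
have hp : pars cc (val r) = Some (val a) by rewrite hrv; case/andP: hk => _ /eqP.
rewrite -hrv; apply: wit_kid => //.
have hch : Some r \in children parT2 (Some a) by rewrite /parT2 (childrenC Hcc l0) hp.
have := S5_2 hmu hin hch; case/andP => hle _.
by rewrite /comparable_el hle orbT.
Qed.

Lemma S6_2 u s : mu2 u = inl s -> inner zS parS s ->
  exists x y : L, [/\ lca None parT2 (lf2 x) (lf2 y) = u,
    witness None parT2 parS mu2 (lf2 x) u, witness None parT2 parS mu2 (lf2 y) u &
    s = lca zS parS (mS (sigma x)) (mS (sigma y))].
Proof.
move=> hmu hin; case: (vertex_case hmu hin) => a [eu ht hts htau hcol]; subst u.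
have hA := valP a.
have hc : (1 < #|val a|)%N by case/and3P: ht.
case: (find_X hA hts ht) => X [hkX hXR hb].
have hkR := Rk_kid hA hc.
case/kidp_spec: (hkR) => hR _ hpR; case/kidp_spec: (hkX) => hX _ hpX.
exists (dl (Rk (val a))), (dl X); split.
- case: (lca2_leaf (dl (Rk (val a))) (dl X)) => w [-> hw]; congr Some; apply: val_inj.
  rewrite hw; apply: (lca_kids hkR hkX); [by rewrite eq_sym | exact: dl_in | exact: dl_in].
- exact: kid_wit hmu hin hkR.
- exact: kid_wit hmu hin hkX.
- have hx1 : dl (Rk (val a)) \in val a := subsetP (proper_sub hpR) _ (dl_in hR).
  have h1 := lca_anc1 HpS (mS (sigma (dl (Rk (val a))))) (mS (sigma (dl X))).
  apply: (anc_tau_eq HpS HtS (hcol _ hx1) h1).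
  by rewrite hts -hb.
Qed.

Lemma restricted2 : restricted_scenario sigma None parT2 zS parS tau2 tauS lf2 mS mu2.
Proof.
split.
- exact: relaxed2.
- case=> [A|]; [exists (lf2 (dl (val A))); exact: wit_Some | exists (lf2 (dl setT)); exact: wit_None].
- exact: S5_2.
- exact: S6_2.
Qed.

Lemma main_constr G1 G2 G3 :
  explains sigma zT parT zS parS tauT tauS lf mS G1 G2 G3 ->
  explainable_restricted R sigma G1 G2 G3.
Proof.
move=> hE.
exists VT2, VS, None, parT2, zS, parS, tau2, tauS, lf2, mS, mu2; split.
  exact: restricted2.
exact: explains2.
Qed.

End Main.

Theorem theorem3 (R : realType) (L M : finType) (sigma : L -> M)
  (Glt Geq Ggt : rel L) :
  graph_3partition Glt Geq Ggt ->
  (explainable_relaxed R sigma Glt Geq Ggt <->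
   explainable_restricted R sigma Glt Geq Ggt).
Proof.
move=> _; split; last first.
  case=> VT [VS [zT [parT [zS [parS [tauT [tauS [lf [mS [mu [hres hE]]]]]]]]]]].
  exists VT, VS, zT, parT, zS, parS, tauT, tauS, lf, mS, mu; split => //.
  by case: hres.
case=> VT [VS [zT [parT [zS [parS [tauT [tauS [lf [mS [mu [hrel hE]]]]]]]]]]].
have hpT : planted_phylo zT parT by case: hrel => [[h _ _ _] _].
have [l0 _] : exists l0 : L, True.
  case: (leaf_ex hpT) => v hv.
  case: hrel => _ [[[_ h] _ _] _]; case: (h v) => h1 _; case: (h1 hv) => l _; by exists l.
pose vals := [seq tauT v | v <- enum VT] ++ [seq tauS s | s <- enum VS].
case: (gap_ex vals) => delta [hd hg].
apply: (main_constr hrel hd _ l0 hE).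
move=> u v hu hv huv; apply: hg => //.
  case: hu => [[w ->]|[w ->]]; rewrite mem_cat; apply/orP; [left|right]; apply: map_f; by rewrite mem_enum.
case: hv => [[w ->]|[w ->]]; rewrite mem_cat; apply/orP; [left|right]; apply: map_f; by rewrite mem_enum.
Qed.
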